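(* The large deviation functions of the tracer position have the following asymptotics as $|\xi|\to\infty$: $$\phi_a(\xi)\simeq\rho|\xi|,\qquad \phi_q(\xi)\simeq\frac{\rho}{3\sigma^2}|\xi|^3 .$$ Here $\simeq$ means the ratio tends to $1$.
   Context: System: Brownian point particles on $\mathbb{R}$ with hard-core repulsion. Free single-particle propagator: $g(z,t\mid y,0)=(\pi\sigma^2 t)^{-1/2}\exp[-(z-y)^2/(\sigma^2 t)]$. The tracer starts at the origin. The other particles' initial positions form a Poisson point process of intensity $\rho>0$. $\phi_a$ is the annealed large deviation function of the tracer position: $$\phi_a(\xi)=\frac{\rho\sigma}{2}\big[\sqrt{h(\xi/\sigma)}-\sqrt{h(-\xi/\sigma)}\big]^2,\qquad h(\xi)=\int_\xi^\infty\operatorname{erfc}(\eta)\,d\eta .$$ $\phi_q$ is the quenched large deviation function, given parametrically by $$\phi_q(\xi)=\rho B\xi-\rho\sigma I(B),\qquad \xi=\sigma I'(B),$$ $$I(B)=\int_0^\infty\ln[1+\sinh^2(B/2)\operatorname{erfc}(\eta)\operatorname{erfc}(-\eta)]\,d\eta,$$ and extended to negative $\xi$ by $\phi_q(-\xi)=\phi_q(\xi)$. $\operatorname{erfc}(x)=\frac{2}{\sqrt\pi}\int_x^\infty e^{-u^2}du$. *)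

(* Defs.v *)
From Stdlib Require Import Reals ClassicalEpsilon.
Open Scope R_scope.

(* The (proper) Riemann integral of f over [a,b], when it exists
   (chosen by classical description; value irrelevant otherwise). *)
Definition RInt (f : R -> R) (a b : R) : R :=
  epsilon (inhabits 0)
    (fun l => exists pr : Riemann_integrable f a b, RiemannInt pr = l).

Definition is_int_to_infty (f : R -> R) (a l : R) : Prop :=
  (forall b, a <= b -> exists pr : Riemann_integrable f a b, True) /\
  (forall eps, 0 < eps -> exists M, forall b, M <= b -> a <= b ->
      Rabs (RInt f a b - l) < eps).

Definition Int_to_infty (f : R -> R) (a : R) : R :=
  epsilon (inhabits 0) (fun l => is_int_to_infty f a l).

Definition erfc (x : R) : R :=
  2 / sqrt PI * Int_to_infty (fun u => exp (- (u * u))) x.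

Definition h (xi : R) : R := Int_to_infty erfc xi.

Definition phi_a (rho sigma xi : R) : R :=
  rho * sigma / 2 * (sqrt (h (xi / sigma)) - sqrt (h (- xi / sigma))) ^ 2.

Definition I (B : R) : R :=
  Int_to_infty (fun eta => ln (1 + sinh (B / 2) ^ 2 * erfc eta * erfc (- eta))) 0.

Definition B_of (sigma xi : R) : R :=
  epsilon (inhabits 0)
    (fun B => 0 <= B /\ derivable_pt_lim I B (Rabs xi / sigma)).

(* quenched LDF: phi_q(xi) = rho B xi - rho sigma I(B), xi = sigma I'(B),
   for xi >= 0, extended evenly: phi_q(-xi) = phi_q(xi). *)
Definition phi_q (rho sigma xi : R) : R :=
  let B := B_of sigma xi in
  rho * B * Rabs xi - rho * sigma * I B.

Definition equiv_at_infty (f g : R -> R) : Prop :=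
  forall eps, 0 < eps -> exists M, forall xi, M < Rabs xi ->
    Rabs (f xi / g xi - 1) < eps.

(* Main.v *)
Require Import Defs.
From Stdlib Require Import Reals.
From Stdlib Require Import Psatz Lra Lia ClassicalEpsilon Classical FunctionalExtensionality.
From Coquelicot Require Import Coquelicot.
Open Scope R_scope.

Lemma DRInt_eq (f : R -> R) a b : ex_RInt f a b -> Defs.RInt f a b = RInt f a b.
Proof.
  intro H. unfold Defs.RInt.
  destruct (epsilon_spec (inhabits 0)
    (fun l => exists pr : Riemann_integrable f a b, RiemannInt pr = l)) as [pr Hpr].
  - exists (RiemannInt (ex_RInt_Reals_0 _ _ _ H)). eexists; reflexivity.
  - rewrite <- Hpr. symmetry; apply RInt_Reals.
Qed.

Lemma exR_Ch1 (f : R -> R) a b c : a <= b <= c -> ex_RInt f a c -> ex_RInt f a b.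
Proof. exact (@ex_RInt_Chasles_1 R_CompleteNormedModule f a b c). Qed.
Lemma exR_Ch2 (f : R -> R) a b c : a <= b <= c -> ex_RInt f a c -> ex_RInt f b c.
Proof. exact (@ex_RInt_Chasles_2 R_CompleteNormedModule f a b c). Qed.
Lemma exR_Ch (f : R -> R) a b c : ex_RInt f a b -> ex_RInt f b c -> ex_RInt f a c.
Proof. exact (@ex_RInt_Chasles R_NormedModule f a b c). Qed.
Lemma RInt_Ch (f : R -> R) a b c : ex_RInt f a b -> ex_RInt f b c ->
  RInt f a b + RInt f b c = RInt f a c.
Proof. exact (@RInt_Chasles R_CompleteNormedModule f a b c). Qed.

Lemma Rabs_def2b x y : Rabs x <= y -> - y <= x <= y.
Proof. intros H. unfold Rabs in H. destruct (Rcase_abs x); lra. Qed.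

Definition limi (a : R) (F : R -> R) (l : R) : Prop :=
  forall eps, 0 < eps -> exists M, forall b, M <= b -> a <= b -> Rabs (F b - l) < eps.

Lemma conv_iff (f : R -> R) a l :
  is_int_to_infty f a l <->
  ((forall b, a <= b -> ex_RInt f a b) /\ limi a (fun b => RInt f a b) l).
Proof.
  unfold is_int_to_infty, limi. split.
  - intros [H1 H2]. assert (HE : forall b, a <= b -> ex_RInt f a b).
    { intros b Hb. destruct (H1 b Hb) as [pr _]. now apply ex_RInt_Reals_1. }
    split; [exact HE|]. intros eps Heps. destruct (H2 eps Heps) as [M HM].
    exists M. intros b Hb Hab. rewrite <- DRInt_eq by auto. auto.
  - intros [HE H2]. split.
    + intros b Hb. exists (ex_RInt_Reals_0 _ _ _ (HE b Hb)). exact Logic.I.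
    + intros eps Heps. destruct (H2 eps Heps) as [M HM].
      exists M. intros b Hb Hab. rewrite DRInt_eq by auto. auto.
Qed.

Lemma limi_ext a F G l : (forall b, a <= b -> F b = G b) -> limi a F l -> limi a G l.
Proof.
  intros HE H eps Heps. destruct (H eps Heps) as [M HM]. exists M.
  intros b Hb Hab. rewrite <- HE by auto. auto.
Qed.

Lemma limi_plus a F G l1 l2 : limi a F l1 -> limi a G l2 ->
  limi a (fun b => F b + G b) (l1 + l2).
Proof.
  intros H1 H2 eps Heps.
  destruct (H1 (eps/2)) as [M1 HM1]; [lra|].
  destruct (H2 (eps/2)) as [M2 HM2]; [lra|].
  exists (Rmax M1 M2). intros b Hb Hab.
  specialize (HM1 b (Rle_trans _ _ _ (Rmax_l _ _) Hb) Hab).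
  specialize (HM2 b (Rle_trans _ _ _ (Rmax_r _ _) Hb) Hab).
  apply Rabs_def2 in HM1. apply Rabs_def2 in HM2. apply Rabs_def1; lra.
Qed.

Lemma limi_scal a F l c : limi a F l -> limi a (fun b => c * F b) (c * l).
Proof.
  intros H eps Heps.
  destruct (H (eps / (Rabs c + 1))) as [M HM].
  { apply Rdiv_lt_0_compat; [lra|]. pose proof (Rabs_pos c); lra. }
  exists M. intros b Hb Hab. specialize (HM b Hb Hab).
  replace (c * F b - c * l) with (c * (F b - l)) by ring.
  rewrite Rabs_mult.
  pose proof (Rabs_pos c).
  apply Rle_lt_trans with (Rabs c * (eps / (Rabs c + 1))).
  { apply Rmult_le_compat_l; lra. }
  apply Rlt_le_trans with ((Rabs c + 1) * (eps / (Rabs c + 1))).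
  { apply Rmult_lt_compat_r; [apply Rdiv_lt_0_compat|]; lra. }
  right. field. lra.
Qed.

Lemma limi_const a c : limi a (fun _ => c) c.
Proof. intros eps Heps. exists a. intros. rewrite Rminus_diag, Rabs_R0. lra. Qed.

Lemma limi_le_ev a F G l1 l2 M0 : limi a F l1 -> limi a G l2 ->
  (forall b, M0 <= b -> a <= b -> F b <= G b) -> l1 <= l2.
Proof.
  intros H1 H2 Hle. apply Rnot_lt_le; intro Hl.
  destruct (H1 ((l1 - l2)/2)) as [M1 HM1]; [lra|].
  destruct (H2 ((l1 - l2)/2)) as [M2 HM2]; [lra|].
  set (b := Rmax (Rmax a M0) (Rmax M1 M2)).
  assert (Ha : a <= b) by (unfold b; rewrite <- Rmax_l; apply Rmax_l).
  assert (Hb0 : M0 <= b) by (unfold b; rewrite <- Rmax_l; apply Rmax_r).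
  assert (Hb1 : M1 <= b) by (unfold b; rewrite <- Rmax_r; apply Rmax_l).
  assert (Hb2 : M2 <= b) by (unfold b; rewrite <- Rmax_r; apply Rmax_r).
  specialize (HM1 b Hb1 Ha). specialize (HM2 b Hb2 Ha). specialize (Hle b Hb0 Ha).
  apply Rabs_def2 in HM1. apply Rabs_def2 in HM2. lra.
Qed.

Lemma limi_le a F G l1 l2 : limi a F l1 -> limi a G l2 ->
  (forall b, a <= b -> F b <= G b) -> l1 <= l2.
Proof. intros H1 H2 H. apply (limi_le_ev a F G l1 l2 a); auto. Qed.

Lemma limi_unique a F l1 l2 : limi a F l1 -> limi a F l2 -> l1 = l2.
Proof.
  intros H1 H2. apply Rle_antisym.
  - apply (limi_le a F F); auto; intros; lra.
  - apply (limi_le a F F); auto; intros; lra.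
Qed.

Lemma Int_eq (f : R -> R) a l : is_int_to_infty f a l -> Int_to_infty f a = l.
Proof.
  intro H. unfold Int_to_infty.
  assert (H' : is_int_to_infty f a (epsilon (inhabits 0) (fun l => is_int_to_infty f a l))).
  { apply epsilon_spec. exists l; exact H. }
  apply conv_iff in H. apply conv_iff in H'.
  apply (limi_unique a (fun b => RInt f a b)); tauto.
Qed.

Lemma RInt_mono_b (f : R -> R) a b c : a <= b -> b <= c -> ex_RInt f a c ->
  (forall x, b <= x <= c -> 0 <= f x) -> RInt f a b <= RInt f a c.
Proof.
  intros Hab Hbc HE Hpos. rewrite <- (RInt_Ch f a b c).
  - cut (0 <= RInt f b c). { lra. }
    apply RInt_ge_0; auto. apply exR_Ch2 with a; [lra|auto].
    intros x Hx; apply Hpos; lra.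
  - apply exR_Ch1 with c; [lra|auto].
  - apply exR_Ch2 with a; [lra|auto].
Qed.

Lemma conv_mono (f : R -> R) a K :
  (forall b, a <= b -> ex_RInt f a b) -> (forall x, a <= x -> 0 <= f x) ->
  (forall b, a <= b -> RInt f a b <= K) ->
  exists l, is_int_to_infty f a l /\ (forall b, a <= b -> RInt f a b <= l).
Proof.
  intros HE Hpos HK.
  set (E := fun y => exists b, a <= b /\ y = RInt f a b).
  assert (Hb : bound E). { exists K. intros y [b [Hab ->]]. auto. }
  assert (Hne : exists y, E y). { exists (RInt f a a). exists a. split; [lra|auto]. }
  destruct (completeness E Hb Hne) as [l [Hub Hlub]].
  assert (Hmono : forall b c, a <= b -> b <= c -> RInt f a b <= RInt f a c).
  { intros b c Hab Hbc. apply RInt_mono_b; auto. apply HE; lra. intros; apply Hpos; lra. }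
  exists l. split.
  - apply conv_iff. split; [exact HE|].
    intros eps Heps.
    destruct (classic (exists b, a <= b /\ l - eps < RInt f a b)) as [[b0 [Hb0 Hlt]]|Hn].
    + exists b0. intros b Hbb Hab.
      assert (RInt f a b <= l) by (apply Hub; exists b; auto).
      assert (RInt f a b0 <= RInt f a b) by (apply Hmono; lra).
      apply Rabs_def1; lra.
    + exfalso. assert (l <= l - eps); [|lra].
      apply Hlub. intros y [b [Hab ->]].
      apply Rnot_lt_le; intro; apply Hn; exists b; auto.
  - intros b Hab. apply Hub. exists b; auto.
Qed.

Lemma conv_partial_le (f : R -> R) a l : is_int_to_infty f a l -> (forall x, a <= x -> 0 <= f x) ->
  forall b, a <= b -> RInt f a b <= l.
Proof.
  intros H Hpos b Hab. apply conv_iff in H. destruct H as [HE Hl].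
  apply (limi_le_ev a (fun _ => RInt f a b) (fun c => RInt f a c) _ _ b).
  - apply limi_const.
  - exact Hl.
  - intros c Hbc Hac. apply RInt_mono_b; auto. intros; apply Hpos; lra.
Qed.

Lemma RInt_plusR (f g : R -> R) a b : ex_RInt f a b -> ex_RInt g a b ->
  RInt (fun x => f x + g x) a b = RInt f a b + RInt g a b.
Proof. intros. exact (@RInt_plus R_CompleteNormedModule f g a b H H0). Qed.
Lemma ex_RInt_plusR (f g : R -> R) a b : ex_RInt f a b -> ex_RInt g a b ->
  ex_RInt (fun x => f x + g x) a b.
Proof. intros. exact (@ex_RInt_plus R_NormedModule f g a b H H0). Qed.
Lemma RInt_scalR (f : R -> R) a b c : ex_RInt f a b ->
  RInt (fun x => c * f x) a b = c * RInt f a b.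
Proof. intros. exact (@RInt_scal R_CompleteNormedModule f a b c H). Qed.
Lemma ex_RInt_scalR (f : R -> R) a b c : ex_RInt f a b -> ex_RInt (fun x => c * f x) a b.
Proof. intros. exact (@ex_RInt_scal R_NormedModule f a b c H). Qed.
Lemma RInt_minusR (f g : R -> R) a b : ex_RInt f a b -> ex_RInt g a b ->
  RInt (fun x => f x - g x) a b = RInt f a b - RInt g a b.
Proof. intros. exact (@RInt_minus R_CompleteNormedModule f g a b H H0). Qed.
Lemma ex_RInt_minusR (f g : R -> R) a b : ex_RInt f a b -> ex_RInt g a b ->
  ex_RInt (fun x => f x - g x) a b.
Proof. intros. exact (@ex_RInt_minus R_NormedModule f g a b H H0). Qed.
Lemma RInt_constR a b c : RInt (fun _ => c) a b = (b - a) * c.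
Proof. exact (@RInt_const R_CompleteNormedModule a b c). Qed.
Lemma ex_RInt_contR (f : R -> R) a b : (forall x, Rmin a b <= x <= Rmax a b -> continuous f x) ->
  ex_RInt f a b.
Proof. exact (@ex_RInt_continuous R_CompleteNormedModule f a b). Qed.
Lemma RInt_extR (f g : R -> R) a b : (forall x, Rmin a b < x < Rmax a b -> f x = g x) ->
  RInt f a b = RInt g a b.
Proof. exact (@RInt_ext R_CompleteNormedModule f g a b). Qed.
Lemma ex_RInt_extR (f g : R -> R) a b : (forall x, Rmin a b < x < Rmax a b -> f x = g x) ->
  ex_RInt f a b -> ex_RInt g a b.
Proof. exact (@ex_RInt_ext R_NormedModule f g a b). Qed.

Lemma limi_ext_ev a F G l M0 : (forall b, M0 <= b -> a <= b -> F b = G b) -> limi a F l -> limi a G l.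
Proof.
  intros HE H eps Heps. destruct (H eps Heps) as [M HM]. exists (Rmax M M0).
  intros b Hb Hab. rewrite <- HE. apply HM; auto.
  apply Rle_trans with (Rmax M M0); auto; apply Rmax_l.
  apply Rle_trans with (Rmax M M0); auto; apply Rmax_r. auto.
Qed.

Lemma conv_plus (f g : R -> R) a l1 l2 : is_int_to_infty f a l1 -> is_int_to_infty g a l2 ->
  is_int_to_infty (fun x => f x + g x) a (l1 + l2).
Proof.
  rewrite !conv_iff. intros [E1 L1] [E2 L2]. split.
  - intros; apply ex_RInt_plusR; auto.
  - apply limi_ext with (fun b => RInt f a b + RInt g a b).
    + intros; rewrite RInt_plusR; auto.
    + apply limi_plus; auto.
Qed.

Lemma conv_scal (f : R -> R) a l c : is_int_to_infty f a l ->
  is_int_to_infty (fun x => c * f x) a (c * l).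
Proof.
  rewrite !conv_iff. intros [E1 L1]. split.
  - intros; apply ex_RInt_scalR; auto.
  - apply limi_ext with (fun b => c * RInt f a b).
    + intros; rewrite RInt_scalR; auto.
    + apply limi_scal; auto.
Qed.

Lemma conv_ext (f g : R -> R) a l : (forall x, a <= x -> f x = g x) ->
  is_int_to_infty f a l -> is_int_to_infty g a l.
Proof.
  rewrite !conv_iff. intros Hfg [E1 L1]. split.
  - intros b Hb; apply ex_RInt_extR with f; auto. intros x Hx; apply Hfg.
    rewrite Rmin_left in Hx; lra.
  - apply limi_ext with (fun b => RInt f a b); auto.
    intros b Hb; apply RInt_extR. intros x Hx; apply Hfg. rewrite Rmin_left in Hx; lra.
Qed.

Lemma conv_le (f g : R -> R) a l1 l2 : is_int_to_infty f a l1 -> is_int_to_infty g a l2 ->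
  (forall x, a <= x -> f x <= g x) -> l1 <= l2.
Proof.
  rewrite !conv_iff. intros [E1 L1] [E2 L2] Hle.
  apply (limi_le a _ _ _ _ L1 L2). intros b Hb. apply RInt_le; auto.
  intros; apply Hle; lra.
Qed.

Lemma conv_shift_r (f : R -> R) a l c : is_int_to_infty f a l -> a <= c ->
  is_int_to_infty f c (l - RInt f a c).
Proof.
  rewrite !conv_iff. intros [E1 L1] Hac. split.
  - intros b Hb. apply exR_Ch2 with a; [lra|]. apply E1; lra.
  - apply limi_ext_ev with (fun b => RInt f a b + (- RInt f a c)) c.
    + intros b _ Hb. rewrite <- (RInt_Ch f a c b); [ring| |].
      apply exR_Ch1 with b; [lra|]; apply E1; lra.
      apply exR_Ch2 with a; [lra|]; apply E1; lra.
    + intros eps Heps. destruct (L1 eps Heps) as [M HM]. exists (Rmax M c).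
      intros b Hb Hcb. replace (RInt f a b + - RInt f a c - (l - RInt f a c)) with (RInt f a b - l) by ring.
      apply HM. apply Rle_trans with (Rmax M c); auto; apply Rmax_l. lra.
Qed.

Lemma conv_shift_l (f : R -> R) a l c : is_int_to_infty f a l -> c <= a -> ex_RInt f c a ->
  is_int_to_infty f c (RInt f c a + l).
Proof.
  rewrite !conv_iff. intros [E1 L1] Hca Eca. split.
  - intros b Hb. destruct (Rle_dec b a).
    + apply exR_Ch1 with a; [lra|auto].
    + apply exR_Ch with a; auto. apply E1; lra.
  - apply limi_ext_ev with (fun b => RInt f c a + RInt f a b) a.
    + intros b Hb _. apply RInt_Ch; auto.
    + intros eps Heps. destruct (L1 eps Heps) as [M HM]. exists (Rmax M a).
      intros b Hb Hcb. replace (RInt f c a + RInt f a b - (RInt f c a + l)) with (RInt f a b - l) by ring.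
      apply HM. apply Rle_trans with (Rmax M a); auto; apply Rmax_l.
      apply Rle_trans with (Rmax M a); auto; apply Rmax_r.
Qed.

Lemma conv_dom (f k : R -> R) a L : (forall b, a <= b -> ex_RInt f a b) ->
  (forall x, a <= x -> Rabs (f x) <= k x) -> is_int_to_infty k a L ->
  exists l, is_int_to_infty f a l /\ Rabs l <= L.
Proof.
  intros Ef Hk Ck.
  assert (Ek : forall b, a <= b -> ex_RInt k a b) by (apply conv_iff in Ck; tauto).
  assert (kpos : forall x, a <= x -> 0 <= k x).
  { intros x Hx. specialize (Hk x Hx). pose proof (Rabs_pos (f x)); lra. }
  pose proof (conv_partial_le k a L Ck kpos) as HkL.
  destruct (conv_mono (fun x => f x + k x) a (2 * L)) as [lg [Cg _]].
  - intros; apply ex_RInt_plusR; auto.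
  - intros x Hx. specialize (Hk x Hx). apply Rabs_def2b in Hk. lra.
  - intros b Hb. rewrite RInt_plusR; auto.
    assert (RInt f a b <= RInt k a b).
    { apply RInt_le; auto. intros x Hx. specialize (Hk x ltac:(lra)).
      apply Rabs_def2b in Hk; lra. }
    specialize (HkL b Hb). lra.
  - exists (lg - L).
    assert (Cf : is_int_to_infty f a (lg - L)).
    { apply conv_ext with (fun x => (f x + k x) + (-1) * k x).
      intros; ring.
      replace (lg - L) with (lg + (-1) * L) by ring.
      apply conv_plus; auto. apply conv_scal; auto. }
    split; auto.
    apply Rabs_le. split.
    + replace (- L) with ((-1) * L) by ring.
      apply (conv_le (fun x => (-1) * k x) f a); auto. apply conv_scal; auto.
      intros x Hx. specialize (Hk x Hx). apply Rabs_def2b in Hk; lra.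
    + apply (conv_le f k a); auto.
      intros x Hx. specialize (Hk x Hx). apply Rabs_def2b in Hk; lra.
Qed.

Lemma exp_le x y : x <= y -> exp x <= exp y.
Proof. intros [H|H]. left; apply exp_increasing; auto. subst; lra. Qed.

Lemma ln_le x y : 0 < x -> x <= y -> ln x <= ln y.
Proof. intros Hx [H|H]. left; apply ln_increasing; auto. subst; lra. Qed.

Definition gs (u : R) : R := exp (- (u * u)).
Definition G (x : R) : R := RInt gs 0 x.

Lemma gs_cont x : continuous gs x.
Proof.
  apply continuity_pt_filterlim. unfold gs.
  apply derivable_continuous_pt. apply ex_derive_Reals_0. auto_derive. auto.
Qed.

Lemma ex_RInt_gs a b : ex_RInt gs a b.
Proof. apply (@ex_RInt_continuous R_CompleteNormedModule). intros; apply gs_cont. Qed.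

Lemma G_derive (x : R) : is_derive G x (gs x).
Proof.
  apply is_derive_RInt with (a := 0).
  - apply filter_forall. intros b. unfold G. apply (@RInt_correct R_CompleteNormedModule). apply ex_RInt_gs.
  - apply gs_cont.
Qed.

Definition fpar (u t : R) : R := exp (- (u * u) * (1 + t * t)) / (1 + t * t).
Definition Fp (x : R) : R := RInt (fun t => fpar x t) 0 1.

Lemma fpar_derive u t : is_derive (fun z => fpar z t) u (- 2 * u * exp (- (u * u) * (1 + t * t))).
Proof.
  unfold fpar. auto_derive.
  - nra.
  - field. nra.
Qed.

Lemma cont_exp_pt x : continuity_pt exp x.
Proof. apply derivable_continuous_pt. apply derivable_pt_exp. Qed.

Lemma Fp_derive (x : R) : is_derive Fp x (RInt (fun t => - 2 * x * exp (- (x * x) * (1 + t * t))) 0 1).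
Proof.
  assert (HD : forall u t, Derive (fun z => fpar z t) u = - 2 * u * exp (- (u * u) * (1 + t * t))).
  { intros; apply is_derive_unique, fpar_derive. }
  unfold Fp.
  rewrite (RInt_ext _ (fun t => Derive (fun u => fpar u t) x)).
  2:{ intros; rewrite HD; reflexivity. }
  apply (is_derive_RInt_param fpar 0 1 x).
  - apply filter_forall. intros y t _. eexists. apply fpar_derive.
  - intros t _. apply continuity_2d_pt_ext with (fun u v => - 2 * u * exp (- (u * u) * (1 + v * v))).
    { intros; rewrite HD; reflexivity. }
    apply continuity_2d_pt_mult.
    + apply continuity_2d_pt_mult. apply continuity_2d_pt_const. apply continuity_2d_pt_id1.
    + apply continuity_1d_2d_pt_comp with (f := exp) (g := fun u v => - (u * u) * (1 + v * v)).
      apply cont_exp_pt.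
      apply continuity_2d_pt_mult.
      * apply continuity_2d_pt_opp, continuity_2d_pt_mult; apply continuity_2d_pt_id1.
      * apply continuity_2d_pt_plus. apply continuity_2d_pt_const.
        apply continuity_2d_pt_mult; apply continuity_2d_pt_id2.
  - apply filter_forall. intros y. apply (@ex_RInt_continuous R_CompleteNormedModule).
    intros z _. apply continuity_pt_filterlim. unfold fpar.
    apply derivable_continuous_pt. apply ex_derive_Reals_0. auto_derive. nra.
Qed.

Lemma Fp_derive' (x : R) : is_derive Fp x (- 2 * gs x * G x).
Proof.
  eapply is_derive_ext; [intros; reflexivity|].
  replace (- 2 * gs x * G x) with (RInt (fun t => - 2 * x * exp (- (x * x) * (1 + t * t))) 0 1).
  apply Fp_derive.
  rewrite (RInt_extR _ (fun t => (- 2 * gs x) * (x * gs (x * t + 0)))).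
  2:{ intros t _. unfold gs.
      replace (- (x * x) * (1 + t * t)) with (- (x * x) + - ((x * t + 0) * (x * t + 0))) by ring.
      rewrite exp_plus. ring. }
  assert (E : RInt (fun t => x * gs (x * t + 0)) 0 1 = G x).
  { transitivity (RInt gs (x * 0 + 0) (x * 1 + 0)).
    + apply (@RInt_comp_lin R_CompleteNormedModule gs x 0 0 1). apply ex_RInt_gs.
    + unfold G. rewrite Rmult_0_r, Rmult_1_r, !Rplus_0_r. reflexivity. }
  rewrite RInt_scalR.
  - rewrite E. reflexivity.
  - apply ex_RInt_contR. intros z _.
    apply continuity_pt_filterlim. unfold gs.
    apply derivable_continuous_pt. apply ex_derive_Reals_0. auto_derive. auto.
Qed.

Definition Hg (x : R) : R := Fp x + G x * G x.

Lemma Hg_const (x : R) : Hg x = Hg 0.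
Proof.
  assert (HD : forall y, is_derive Hg y 0).
  { intros y. unfold Hg. eapply is_derive_ext; [intros; reflexivity|].
    replace 0 with (- 2 * gs y * G y + (gs y * G y + G y * gs y)) by ring.
    apply (@is_derive_plus R_AbsRing R_NormedModule). apply Fp_derive'.
    apply (@is_derive_mult R_AbsRing). apply G_derive. apply G_derive.
    intros; unfold mult; simpl; ring. }
  destruct (MVT_gen Hg 0 x (fun _ => 0)) as [c [_ Hc]].
  - intros; apply HD.
  - intros; apply derivable_continuous_pt. apply ex_derive_Reals_0. eexists; apply HD.
  - lra.
Qed.

Lemma Hg0 : Hg 0 = PI / 4.
Proof.
  unfold Hg, G. rewrite RInt_point. unfold zero; simpl.
  unfold Fp. rewrite (RInt_extR _ (fun t => / (1 + t * t))).
  2:{ intros; unfold fpar. replace (- (0 * 0) * (1 + x * x)) with 0 by ring.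
      rewrite exp_0. unfold Rdiv. ring. }
  rewrite (is_RInt_unique (fun t => / (1 + t * t)) 0 1 (minus (atan 1) (atan 0))).
  - rewrite atan_1, atan_0. unfold minus, plus, opp; simpl. ring.
  - apply (@is_RInt_derive R_CompleteNormedModule).
    + intros x _. apply is_derive_Reals. pose proof (derivable_pt_lim_atan x).
      replace (x * x) with (x ^ 2) by ring. exact H.
    + intros x _. apply continuity_pt_filterlim. apply derivable_continuous_pt.
      apply ex_derive_Reals_0. auto_derive. nra.
Qed.

Lemma G_odd (x : R) : G (- x) = - G x.
Proof.
  unfold G.
  transitivity (RInt (fun y => (-1) * gs (-1 * y + 0)) 0 x).
  - symmetry. transitivity (RInt gs (-1 * 0 + 0) (-1 * x + 0)).
    + apply (@RInt_comp_lin R_CompleteNormedModule gs (-1) 0 0 x). apply ex_RInt_gs.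
    + f_equal; ring.
  - rewrite RInt_scalR. replace (- RInt gs 0 x) with (-1 * RInt gs 0 x) by ring. f_equal. apply RInt_extR. intros; unfold gs; f_equal; ring.
    apply ex_RInt_contR. intros z _. apply continuity_pt_filterlim. unfold gs.
    apply derivable_continuous_pt. apply ex_derive_Reals_0. auto_derive. auto.
Qed.

Lemma G_nonneg (x : R) : 0 <= x -> 0 <= G x.
Proof.
  intros Hx. unfold G. apply RInt_ge_0; auto. apply ex_RInt_gs.
  intros; unfold gs; left; apply exp_pos.
Qed.

Lemma Fp_bounds (x : R) : 0 <= Fp x <= exp (- (x * x)).
Proof.
  assert (E : ex_RInt (fun t => fpar x t) 0 1).
  { apply ex_RInt_contR. intros z _. apply continuity_pt_filterlim. unfold fpar.
    apply derivable_continuous_pt. apply ex_derive_Reals_0. auto_derive. nra. }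
  split.
  - unfold Fp. apply RInt_ge_0; auto. lra. intros t _. unfold fpar.
    apply Rlt_le, Rdiv_lt_0_compat. apply exp_pos. nra.
  - unfold Fp. apply Rle_trans with (RInt (fun _ => exp (- (x * x))) 0 1).
    + apply RInt_le; auto. lra. apply ex_RInt_contR. intros; apply continuous_const.
      intros t Ht. unfold fpar.
      assert (exp (- (x * x) * (1 + t * t)) <= exp (- (x * x))).
      { apply exp_le. nra. }
      assert (1 <= 1 + t * t) by nra.
      apply Rle_trans with (exp (- (x * x) * (1 + t * t)) / 1).
      * apply Rmult_le_compat_l. left; apply exp_pos.
        apply Rinv_le_contravar; lra.
      * lra.
    + rewrite RInt_constR. lra.
Qed.

Definition sp : R := sqrt PI / 2.

Lemma sp_pos : 0 < sp.
Proof. unfold sp. pose proof (sqrt_lt_R0 PI PI_RGT_0). lra. Qed.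

Lemma sp_sq : sp * sp = PI / 4.
Proof. unfold sp. pose proof (sqrt_sqrt PI (Rlt_le _ _ PI_RGT_0)). nra. Qed.

Lemma G_sq (x : R) : G x * G x = PI / 4 - Fp x.
Proof. pose proof (Hg_const x). rewrite Hg0 in H. unfold Hg in H. lra. Qed.

Lemma G_le_sp (x : R) : G x <= sp.
Proof.
  destruct (Rle_dec 0 x).
  - pose proof (G_nonneg x r). pose proof (G_sq x). pose proof (Fp_bounds x).
    pose proof sp_sq. pose proof sp_pos. nra.
  - replace x with (- - x) by ring. rewrite G_odd.
    pose proof (G_nonneg (- x) ltac:(lra)). pose proof sp_pos. lra.
Qed.

Lemma G_tail (x : R) : 0 <= x -> 0 <= sp - G x <= exp (- (x * x)) / sp.
Proof.
  intros Hx. pose proof (G_nonneg x Hx). pose proof (G_sq x). pose proof (Fp_bounds x).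
  pose proof sp_sq. pose proof sp_pos. pose proof (G_le_sp x).
  split; [lra|].
  apply Rmult_le_reg_r with sp; auto. unfold Rdiv. rewrite Rmult_assoc, Rinv_l by lra.
  nra.
Qed.

Lemma limi_change a c F l : limi a F l -> limi c F l.
Proof.
  intros H eps Heps. destruct (H eps Heps) as [M HM]. exists (Rmax M a).
  intros b Hb _. apply HM. eapply Rle_trans; [apply Rmax_l|eauto].
  eapply Rle_trans; [apply Rmax_r|eauto].
Qed.

Lemma limi_G : limi 0 G sp.
Proof.
  intros eps Heps. pose proof sp_pos.
  exists (/ (sp * eps)). intros b Hb H0b.
  assert (HM : 0 < / (sp * eps)) by (apply Rinv_0_lt_compat; nra).
  pose proof (G_tail b H0b).
  rewrite Rabs_minus_sym, Rabs_right by lra.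
  apply Rle_lt_trans with (exp (- (b * b)) / sp); [lra|].
  apply Rmult_lt_reg_r with sp; auto. unfold Rdiv. rewrite Rmult_assoc, Rinv_l by lra.
  rewrite Rmult_1_r, exp_Ropp.
  pose proof (exp_ineq1_le (b * b)).
  assert (b < 1 + b * b) by nra.
  apply Rle_lt_trans with (/ (1 + b * b)).
  - apply Rinv_le_contravar; nra.
  - replace (eps * sp) with (/ / (sp * eps)) by (rewrite Rinv_inv; ring).
    apply Rinv_lt_contravar; nra.
Qed.

Lemma gs_conv (a : R) : is_int_to_infty gs a (sp - G a).
Proof.
  apply conv_iff. split.
  - intros; apply ex_RInt_gs.
  - apply limi_ext with (fun b => G b + - G a).
    + intros b _. unfold G. rewrite <- (RInt_Ch gs 0 a b) by apply ex_RInt_gs. ring.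
    + apply limi_plus. apply limi_change with 0, limi_G. apply limi_const.
Qed.

Lemma RInt_swapR (f : R -> R) a b : ex_RInt f a b -> RInt f b a = - RInt f a b.
Proof. intros H. rewrite <- (@opp_RInt_swap R_CompleteNormedModule f a b H). reflexivity. Qed.

Lemma sp_le1 : sp <= 1.
Proof.
  unfold sp. assert (sqrt PI <= 2); [|lra].
  rewrite <- (sqrt_Rsqr 2) by lra. pose proof PI_4; pose proof PI2_3_2; pose proof PI_RGT_0.
  apply sqrt_le_1; unfold Rsqr; lra.
Qed.

Lemma sp_ge_half : 1 / 2 <= sp.
Proof.
  unfold sp. assert (1 <= sqrt PI); [|lra].
  rewrite <- sqrt_1. apply sqrt_le_1_alt. pose proof PI2_3_2. lra.
Qed.

Lemma erfc_eq (x : R) : erfc x = 1 - G x / sp.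
Proof.
  unfold erfc. rewrite (Int_eq _ x (sp - G x)) by apply gs_conv.
  unfold sp. pose proof (sqrt_lt_R0 PI PI_RGT_0). field. lra.
Qed.

Lemma erfc_fun : erfc = fun x => 1 - G x / sp.
Proof. apply functional_extensionality; apply erfc_eq. Qed.

Lemma erfc_derive (x : R) : is_derive erfc x (- gs x / sp).
Proof.
  rewrite erfc_fun. pose proof sp_pos.
  auto_derive.
  - eexists; apply G_derive.
  - replace (Derive (fun x0 => G x0) x) with (gs x) by (symmetry; apply is_derive_unique, G_derive).
    unfold Rdiv. ring.
Qed.

Lemma erfc_cont (x : R) : continuous erfc x.
Proof.
  apply continuity_pt_filterlim. apply derivable_continuous_pt. apply ex_derive_Reals_0.
  eexists; apply erfc_derive.
Qed.

Lemma erfc_cont_pt (x : R) : continuity_pt erfc x.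
Proof. apply continuity_pt_filterlim, erfc_cont. Qed.

Lemma ex_RInt_erfc a b : ex_RInt erfc a b.
Proof. apply ex_RInt_contR. intros; apply erfc_cont. Qed.

Lemma erfc_refl (x : R) : erfc (- x) = 2 - erfc x.
Proof. rewrite !erfc_eq, G_odd. pose proof sp_pos. field. lra. Qed.

Lemma erfc_le1 (x : R) : 0 <= x -> erfc x <= 1.
Proof.
  intros. rewrite erfc_eq. pose proof (G_nonneg x H). pose proof sp_pos.
  assert (0 <= G x / sp) by (apply Rmult_le_pos; [lra| left; apply Rinv_0_lt_compat; lra]). lra.
Qed.

Lemma erfc_ge1 (x : R) : x <= 0 -> 1 <= erfc x.
Proof.
  intros. replace x with (- - x) by ring. rewrite erfc_refl.
  pose proof (erfc_le1 (- x) ltac:(lra)). lra.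
Qed.

Lemma exp_small c eps : 0 < eps -> exists M, forall b, M <= b -> exp (c - 2 * b) < eps.
Proof.
  intros Heps. exists (Rmax 0 (exp c / eps)). intros b Hb.
  assert (H0 : 0 <= b) by (eapply Rle_trans; [apply Rmax_l|eauto]).
  assert (H1 : exp c / eps <= b) by (eapply Rle_trans; [apply Rmax_r|eauto]).
  unfold Rminus. rewrite exp_plus, exp_Ropp.
  pose proof (exp_ineq1_le (2 * b)). pose proof (exp_pos c).
  assert (exp c < eps * exp (2 * b)).
  { apply Rle_lt_trans with (eps * b).
    - unfold Rdiv in H1. apply (Rmult_le_compat_l eps) in H1; [|lra].
      rewrite <- Rmult_assoc, (Rmult_comm eps (exp c)), Rmult_assoc, Rinv_r, Rmult_1_r in H1 by lra.
      exact H1.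
    - apply Rmult_lt_compat_l; lra. }
  apply Rmult_lt_reg_r with (exp (2 * b)). apply exp_pos.
  rewrite Rmult_assoc, Rinv_l. lra. pose proof (exp_pos (2 * b)); lra.
Qed.

Lemma exp_tail_conv c a : is_int_to_infty (fun u => exp (c - 2 * u)) a (exp (c - 2 * a) / 2).
Proof.
  assert (HI : forall b, RInt (fun u => exp (c - 2 * u)) a b = exp (c - 2 * a) / 2 - exp (c - 2 * b) / 2).
  { intros b. apply is_RInt_unique.
    replace (exp (c - 2 * a) / 2 - exp (c - 2 * b) / 2) with
      (minus ((fun u => - exp (c - 2 * u) / 2) b) ((fun u => - exp (c - 2 * u) / 2) a))
      by (unfold minus, plus, opp; simpl; field).
    apply (@is_RInt_derive R_CompleteNormedModule (fun u => - exp (c - 2 * u) / 2)).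
    - intros x _. auto_derive; auto. unfold Rminus. field.
    - intros x _. apply continuity_pt_filterlim. apply derivable_continuous_pt.
      apply ex_derive_Reals_0. auto_derive. auto. }
  apply conv_iff. split.
  - intros b _. apply ex_RInt_contR. intros x _. apply continuity_pt_filterlim.
    apply derivable_continuous_pt. apply ex_derive_Reals_0. auto_derive. auto.
  - intros eps Heps. destruct (exp_small c (2 * eps)) as [M HM]; [lra|].
    exists M. intros b Hb _. rewrite HI.
    pose proof (HM b Hb). pose proof (exp_pos (c - 2 * b)).
    rewrite Rabs_left1 by lra. lra.
Qed.

Lemma Int_gs_eq (x : R) : Int_to_infty (fun u => exp (- (u * u))) x = sp - G x.
Proof. apply Int_eq. apply gs_conv. Qed.

Lemma erfc_upper1 (x : R) : erfc x <= exp (1 - 2 * x).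
Proof.
  assert (sp - G x <= exp (1 - 2 * x) / 2).
  { apply (conv_le gs (fun u => exp (1 - 2 * u)) x). apply gs_conv. apply exp_tail_conv.
    intros u _. unfold gs. apply exp_le. pose proof (Rle_0_sqr (u - 1)). unfold Rsqr in *. nra. }
  rewrite erfc_eq. pose proof sp_ge_half. pose proof (exp_pos (1 - 2 * x)).
  assert (Eq : 1 - G x / sp = (sp - G x) / sp) by (field; lra). rewrite Eq.
  apply Rmult_le_reg_r with sp; [lra|]. unfold Rdiv. rewrite Rmult_assoc, Rinv_l by lra. nra.
Qed.

Lemma erfc_upper2 (x : R) : 1 <= x -> erfc x <= exp (- (x * x)).
Proof.
  intros Hx.
  assert (sp - G x <= exp ((2 * x - x * x) - 2 * x) / 2).
  { apply (conv_le gs (fun u => exp ((2 * x - x * x) - 2 * u)) x). apply gs_conv. apply exp_tail_conv.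
    intros u Hu. unfold gs. apply exp_le. nra. }
  replace ((2 * x - x * x) - 2 * x) with (- (x * x)) in H by ring.
  rewrite erfc_eq. pose proof sp_ge_half. pose proof (exp_pos (- (x * x))).
  assert (Eq : 1 - G x / sp = (sp - G x) / sp) by (field; lra). rewrite Eq.
  apply Rmult_le_reg_r with sp; [lra|]. unfold Rdiv. rewrite Rmult_assoc, Rinv_l by lra. nra.
Qed.

Lemma erfc_lower (x : R) : 0 <= x -> exp (- ((x + 1) * (x + 1))) <= erfc x.
Proof.
  intros Hx.
  assert (RInt gs x (x + 1) <= sp - G x).
  { apply (conv_partial_le gs x). apply gs_conv. intros; unfold gs; left; apply exp_pos. lra. }
  assert (exp (- ((x + 1) * (x + 1))) <= RInt gs x (x + 1)).
  { apply Rle_trans with (RInt (fun _ => exp (- ((x + 1) * (x + 1)))) x (x + 1)).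
    - rewrite RInt_constR. lra.
    - apply RInt_le. lra. apply ex_RInt_contR; intros; apply continuous_const.
      apply ex_RInt_gs. intros u Hu. unfold gs. apply exp_le. nra. }
  rewrite erfc_eq. pose proof sp_pos. pose proof sp_le1.
  pose proof (exp_pos (- ((x + 1) * (x + 1)))).
  assert (Eq : 1 - G x / sp = (sp - G x) / sp) by (field; lra). rewrite Eq.
  apply Rmult_le_reg_r with sp; [lra|]. unfold Rdiv. rewrite Rmult_assoc, Rinv_l by lra. nra.
Qed.

Lemma erfc_pos (x : R) : 0 < erfc x.
Proof.
  destruct (Rle_dec 0 x).
  - pose proof (erfc_lower x r). pose proof (exp_pos (- ((x + 1) * (x + 1)))). lra.
  - pose proof (erfc_ge1 x ltac:(lra)). lra.
Qed.

Lemma erfc_le2 (x : R) : erfc x <= 2.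
Proof.
  replace x with (- - x) by ring. rewrite erfc_refl. pose proof (erfc_pos (- x)). lra.
Qed.

Lemma erfc_conv0 : is_int_to_infty erfc 0 (h 0).
Proof.
  destruct (conv_mono erfc 0 (exp (1 - 2 * 0) / 2)) as [l [Hl _]].
  - intros; apply ex_RInt_erfc.
  - intros; left; apply erfc_pos.
  - intros b Hb. apply Rle_trans with (RInt (fun u => exp (1 - 2 * u)) 0 b).
    + apply RInt_le; auto. apply ex_RInt_erfc.
      apply ex_RInt_contR. intros x _. apply continuity_pt_filterlim.
      apply derivable_continuous_pt. apply ex_derive_Reals_0. auto_derive. auto.
      intros; apply erfc_upper1.
    + apply (conv_partial_le _ 0). apply exp_tail_conv. intros; left; apply exp_pos. auto.
  - unfold h. rewrite (Int_eq _ _ l Hl). exact Hl.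
Qed.

Lemma h0_nonneg : 0 <= h 0.
Proof.
  pose proof (conv_partial_le erfc 0 (h 0) erfc_conv0 (fun x _ => Rlt_le _ _ (erfc_pos x)) 0 (Rle_refl 0)).
  rewrite RInt_point in H. exact H.
Qed.

Lemma RInt_erfc_bounds v : 0 <= v -> 0 <= RInt erfc 0 v <= h 0.
Proof.
  intros Hv. split.
  - apply RInt_ge_0; auto. apply ex_RInt_erfc. intros; left; apply erfc_pos.
  - apply (conv_partial_le erfc 0). apply erfc_conv0. intros; left; apply erfc_pos. auto.
Qed.

Lemma h_pos_side v : 0 <= v -> 0 <= h v <= h 0.
Proof.
  intros Hv. pose proof (conv_shift_r erfc 0 (h 0) v erfc_conv0 Hv).
  assert (E : h v = h 0 - RInt erfc 0 v) by (apply Int_eq; exact H). rewrite E. pose proof (RInt_erfc_bounds v Hv). lra.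
Qed.

Lemma RInt_erfc_neg v : @eq R (RInt erfc (- v) 0) (2 * v - RInt erfc 0 v).
Proof.
  rewrite RInt_swapR by apply ex_RInt_erfc.
  assert (E : RInt erfc 0 (- v) = RInt (fun y => (-1) * erfc (-1 * y + 0)) 0 v).
  { symmetry. transitivity (RInt erfc (-1 * 0 + 0) (-1 * v + 0)).
    - apply (@RInt_comp_lin R_CompleteNormedModule erfc (-1) 0 0 v). apply ex_RInt_erfc.
    - f_equal; ring. }
  rewrite E. rewrite RInt_scalR.
  - rewrite (RInt_extR _ (fun y => 2 - erfc y)).
    + rewrite RInt_minusR. rewrite RInt_constR. ring.
      apply ex_RInt_contR; intros; apply continuous_const. apply ex_RInt_erfc.
    + intros y _. replace (-1 * y + 0) with (- y) by ring. apply erfc_refl.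
  - apply (ex_RInt_extR (fun y => 2 - erfc y)).
    + intros y _. replace (-1 * y + 0) with (- y) by ring. symmetry; apply erfc_refl.
    + apply ex_RInt_minusR. apply ex_RInt_contR; intros; apply continuous_const. apply ex_RInt_erfc.
Qed.

Lemma h_neg_side v : 0 <= v -> 2 * v <= h (- v) <= 2 * v + h 0.
Proof.
  intros Hv. pose proof (conv_shift_l erfc 0 (h 0) (- v) erfc_conv0 ltac:(lra) (ex_RInt_erfc _ _)).
  assert (E : h (- v) = RInt erfc (- v) 0 + h 0) by (apply Int_eq; exact H).
  rewrite E, RInt_erfc_neg. pose proof (RInt_erfc_bounds v Hv). lra.
Qed.

Lemma sqrt_lt_of_sq x y : 0 <= x -> 0 < y -> x < y * y -> sqrt x < y.
Proof.
  intros Hx Hy Hxy. rewrite <- (sqrt_Rsqr y) by lra. apply sqrt_lt_1; unfold Rsqr; nra.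
Qed.

Lemma ratio_core c v P Q eps : 0 <= c -> 0 < eps -> 1 <= v -> c <= v ->
  c / eps < 2 * v -> 3 * c < eps * eps * v ->
  2 * v <= P <= 2 * v + c -> 0 <= Q <= c ->
  Rabs ((sqrt P - sqrt Q) ^ 2 / (2 * v) - 1) < eps.
Proof.
  intros Hc He Hv1 Hcv H1 H2 [HP1 HP2] [HQ1 HQ2].
  set (S := sqrt P). set (T := sqrt Q).
  assert (HS : S * S = P) by (apply sqrt_sqrt; lra).
  assert (HT : T * T = Q) by (apply sqrt_sqrt; lra).
  assert (HS0 : 0 <= S) by apply sqrt_pos.
  assert (HT0 : 0 <= T) by apply sqrt_pos.
  assert (HST : S * T = sqrt (P * Q)) by (unfold S, T; rewrite sqrt_mult; lra).
  assert (HPQ : sqrt (P * Q) < eps * v).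
  { apply sqrt_lt_of_sq. nra. nra.
    apply Rle_lt_trans with ((2 * v + c) * c). apply Rmult_le_compat; nra.
    nra. }
  assert (HTS : T <= S).
  { apply Rnot_lt_le. intro. assert (S * S < T * T) by nra. nra. }
  assert (Hv : 0 < 2 * v) by lra.
  apply Rabs_def1.
  - apply Rmult_lt_reg_r with (2 * v); auto.
    replace (((S - T) ^ 2 / (2 * v) - 1) * (2 * v)) with ((S - T) ^ 2 - 2 * v) by (field; lra).
    assert ((S - T) ^ 2 <= P) by nra.
    assert (c < eps * (2 * v)).
    { apply Rmult_lt_reg_r with (/ eps). apply Rinv_0_lt_compat; lra.
      replace (eps * (2 * v) * / eps) with (2 * v) by (field; lra). exact H1. }
    nra.
  - apply Rmult_lt_reg_r with (2 * v); auto.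
    replace (((S - T) ^ 2 / (2 * v) - 1) * (2 * v)) with ((S - T) ^ 2 - 2 * v) by (field; lra).
    assert ((S - T) ^ 2 >= P - 2 * (S * T)) by nra.
    nra.
Qed.

Lemma annealed (rho sigma : R) : 0 < rho -> 0 < sigma ->
  equiv_at_infty (phi_a rho sigma) (fun xi => rho * Rabs xi).
Proof.
  intros Hr Hs eps Heps.
  pose proof h0_nonneg as Hc. set (c := h 0) in *.
  set (V := 1 + c + c / eps + 3 * c / (eps * eps)).
  assert (Hce : 0 <= c / eps) by (apply Rmult_le_pos; [lra|left; apply Rinv_0_lt_compat; lra]).
  assert (Hce2 : 0 <= 3 * c / (eps * eps)) by (apply Rmult_le_pos; [lra|left; apply Rinv_0_lt_compat; nra]).
  exists (sigma * V). intros xi Hxi.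
  set (v := Rabs xi / sigma).
  assert (Hv : V < v).
  { unfold v. apply Rmult_lt_reg_r with sigma; auto. unfold Rdiv.
    rewrite Rmult_assoc, Rinv_l, Rmult_1_r by lra. lra. }
  assert (HP : 2 * v <= h (- v) <= 2 * v + c) by (apply h_neg_side; unfold V in Hv; lra).
  assert (HQ : 0 <= h v <= c) by (apply h_pos_side; unfold V in Hv; lra).
  assert (Habs : rho * Rabs xi = rho * sigma * v) by (unfold v; field; lra).
  assert (Hphi : phi_a rho sigma xi = rho * sigma / 2 * (sqrt (h (- v)) - sqrt (h v)) ^ 2).
  { unfold phi_a. destruct (Rle_dec 0 xi).
    - unfold v. rewrite Rabs_right by lra. f_equal.
      replace (- (xi / sigma)) with (- xi / sigma) by (field; lra). ring.
    - unfold v. rewrite Rabs_left by lra. f_equal.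
      replace (- xi / sigma) with (- xi / sigma) by ring.
      replace (- (- xi / sigma)) with (xi / sigma) by (field; lra). reflexivity. }
  rewrite Hphi, Habs.
  replace (rho * sigma / 2 * (sqrt (h (- v)) - sqrt (h v)) ^ 2 / (rho * sigma * v))
    with ((sqrt (h (- v)) - sqrt (h v)) ^ 2 / (2 * v)) by (field; unfold V in Hv; repeat split; lra).
  apply ratio_core with c; auto; unfold V in Hv; try lra.
  - apply Rmult_lt_reg_r with (/ (eps * eps)). apply Rinv_0_lt_compat; nra.
    replace (eps * eps * v * / (eps * eps)) with v by (field; lra). unfold Rdiv in Hce2. lra.
Qed.

Lemma cont_of_der (f : R -> R) x l : is_derive f x l -> continuous f x.
Proof.
  intros H. apply continuity_pt_filterlim. apply derivable_continuous_pt.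
  apply ex_derive_Reals_0. eexists; exact H.
Qed.

Lemma contpt_of_der (f : R -> R) x l : is_derive f x l -> continuity_pt f x.
Proof.
  intros H. apply derivable_continuous_pt. apply ex_derive_Reals_0. eexists; exact H.
Qed.

Lemma mvt (f f1 : R -> R) a b : (forall x, is_derive f x (f1 x)) ->
  exists c, Rmin a b <= c <= Rmax a b /\ f b - f a = f1 c * (b - a).
Proof.
  intros H. apply MVT_gen. intros; apply H. intros; eapply contpt_of_der; apply H.
Qed.

Lemma deriv_mono (f f1 : R -> R) : (forall x, is_derive f x (f1 x)) -> (forall x, 0 <= f1 x) ->
  forall a b, a <= b -> f a <= f b.
Proof.
  intros H Hp a b Hab. destruct (mvt f f1 a b H) as [c [_ Hc]].
  pose proof (Hp c). nra.
Qed.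

Lemma convex_of_d2 (f f1 f2 : R -> R) : (forall x, is_derive f x (f1 x)) ->
  (forall x, is_derive f1 x (f2 x)) -> (forall x, 0 <= f2 x) ->
  forall a b t, 0 <= t <= 1 -> f (t * a + (1 - t) * b) <= t * f a + (1 - t) * f b.
Proof.
  intros H1 H2 H3.
  assert (Hm : forall u v, u <= v -> f1 u <= f1 v) by (apply deriv_mono with f2; auto).
  assert (Hgen : forall a b t, a <= b -> 0 <= t <= 1 -> f (t * a + (1 - t) * b) <= t * f a + (1 - t) * f b).
  { intros a b t Hab Ht.
    set (z := t * a + (1 - t) * b).
    destruct (mvt f f1 a z H1) as [c1 [Hc1 E1]].
    destruct (mvt f f1 z b H1) as [c2 [Hc2 E2]].
    assert (a <= z <= b) by (unfold z; nra).
    rewrite Rmin_left, Rmax_right in Hc1 by lra.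
    rewrite Rmin_left, Rmax_right in Hc2 by lra.
    assert (f1 c1 <= f1 c2) by (apply Hm; lra).
    assert (z - a = (1 - t) * (b - a)) by (unfold z; ring).
    assert (b - z = t * (b - a)) by (unfold z; ring).
    assert (t * (f z - f a) <= (1 - t) * (f b - f z)).
    { rewrite E1, E2, H4, H5.
      assert (0 <= t * (1 - t) * (b - a)) by (apply Rmult_le_pos; nra).
      nra. }
    lra. }
  intros a b t Ht. destruct (Rle_dec a b).
  - apply Hgen; auto.
  - replace (t * a + (1 - t) * b) with ((1 - t) * b + (1 - (1 - t)) * a) by ring.
    replace (t * f a + (1 - t) * f b) with ((1 - t) * f b + (1 - (1 - t)) * f a) by ring.
    apply Hgen; lra.
Qed.

Lemma lip_of_d (f f1 : R -> R) B K d : (forall x, is_derive f x (f1 x)) ->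
  (forall u, B - Rabs d <= u <= B + Rabs d -> Rabs (f1 u) <= K) ->
  Rabs (f (B + d) - f B) <= K * Rabs d.
Proof.
  intros H HK. destruct (mvt f f1 B (B + d) H) as [c [Hc E]].
  rewrite E. replace (B + d - B) with d by ring. rewrite Rabs_mult.
  apply Rmult_le_compat_r. apply Rabs_pos. apply HK.
  unfold Rmin, Rmax in Hc. destruct (Rle_dec B (B + d)); unfold Rabs; destruct (Rcase_abs d); lra.
Qed.

Lemma taylor2 (f f1 f2 : R -> R) B K d : (forall x, is_derive f x (f1 x)) ->
  (forall x, is_derive f1 x (f2 x)) ->
  (forall u, B - Rabs d <= u <= B + Rabs d -> Rabs (f2 u) <= K) ->
  Rabs (f (B + d) - f B - d * f1 B) <= K * (d * d).
Proof.
  intros H1 H2 HK.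
  set (g := fun s => f (B + s) - f B - s * f1 B).
  set (g1 := fun s => f1 (B + s) - f1 B).
  assert (Hg : forall s, is_derive g s (g1 s)).
  { intros s. unfold g, g1.
    auto_derive.
    - eexists; apply H1.
    - replace (Derive (fun x => f x) (B + s)) with (f1 (B + s)) by (symmetry; apply is_derive_unique, H1).
      ring. }
  assert (Hg0 : g 0 = 0) by (unfold g; rewrite Rplus_0_r; ring).
  assert (Hb : Rabs (g (0 + d) - g 0) <= (K * Rabs d) * Rabs d).
  { apply lip_of_d with g1; auto.
    intros u Hu. unfold g1.
    assert (HK0 : 0 <= K).
    { specialize (HK B). pose proof (Rabs_pos (f2 B)). pose proof (Rabs_pos d).
      assert (Rabs (f2 B) <= K) by (apply HK; lra). lra. }
    assert (Hud : Rabs u <= Rabs d).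
    { unfold Rabs in *. destruct (Rcase_abs u); destruct (Rcase_abs d); lra. }
    apply Rle_trans with (K * Rabs u).
    - apply lip_of_d with f2; auto.
      intros v Hv. apply HK. lra.
    - apply Rmult_le_compat_l; auto. }
  rewrite Hg0, Rplus_0_l, Rminus_0_r in Hb. unfold g in Hb.
  replace (K * (d * d)) with (K * Rabs d * Rabs d). exact Hb.
  rewrite Rmult_assoc, <- Rabs_mult, Rabs_right. ring. nra.
Qed.

Definition Cf (B : R) : R := (exp B + exp (- B)) / 2.
Definition Qf (B : R) : R := (exp B + exp (- B) - 2) / 4.
Definition phi (e B : R) : R := ln (1 + e * Qf B).
Definition dphi (e B : R) : R := e * (exp B - exp (- B)) / 4 / (1 + e * Qf B).
Definition ddphi (e B : R) : R := e * ((2 - e) * Cf B + e) / ((2 + e * (Cf B - 1)) * (2 + e * (Cf B - 1))).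

Lemma Cf_ge1 B : 1 <= Cf B.
Proof.
  unfold Cf. rewrite exp_Ropp. pose proof (exp_pos B).
  assert (exp B + / exp B - 2 = (exp B - 1) * (exp B - 1) / exp B) by (field; lra).
  assert (0 <= (exp B - 1) * (exp B - 1) / exp B).
  { apply Rmult_le_pos. pose proof (Rle_0_sqr (exp B - 1)); unfold Rsqr in *; lra. left; apply Rinv_0_lt_compat; lra. }
  lra.
Qed.

Lemma Qf_Cf B : Qf B = (Cf B - 1) / 2.
Proof. unfold Qf, Cf. field. Qed.

Lemma Qf_nonneg B : 0 <= Qf B.
Proof. rewrite Qf_Cf. pose proof (Cf_ge1 B). lra. Qed.

Lemma sinh_sq B : sinh (B / 2) ^ 2 = Qf B.
Proof.
  unfold sinh, Qf.
  assert (E1 : exp B = exp (B / 2) * exp (B / 2)) by (rewrite <- exp_plus; f_equal; field).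
  assert (E2 : exp (- B) = / exp (B / 2) * / exp (B / 2)).
  { rewrite <- !exp_Ropp, <- exp_plus. f_equal; field. }
  rewrite E1, E2, exp_Ropp. pose proof (exp_pos (B / 2)). field. lra.
Qed.

Lemma phi_der e B : 0 <= e -> is_derive (phi e) B (dphi e B).
Proof.
  intros He. pose proof (Qf_nonneg B). unfold phi, dphi, Qf in *.
  auto_derive.
  - nra.
  - field. nra.
Qed.

Lemma dphi_der e B : 0 <= e -> e <= 1 -> is_derive (dphi e) B (ddphi e B).
Proof.
  intros He He1. pose proof (Qf_nonneg B). pose proof (Cf_ge1 B).
  unfold dphi, ddphi, Qf, Cf in *.
  auto_derive.
  - nra.
  - rewrite !exp_Ropp in *. pose proof (exp_pos B). field. split; nra.
Qed.

Lemma ddphi_bounds e B : 0 <= e -> e <= 1 -> 0 <= ddphi e B <= e * Cf B.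
Proof.
  intros He He1. pose proof (Cf_ge1 B). unfold ddphi.
  set (C := Cf B) in *. set (D := 2 + e * (C - 1)).
  assert (HD : 2 <= D) by (unfold D; nra).
  assert (HN : 0 <= e * ((2 - e) * C + e)) by (apply Rmult_le_pos; nra).
  split.
  - apply Rmult_le_pos; auto. left; apply Rinv_0_lt_compat; nra.
  - apply Rmult_le_reg_r with (D * D). nra.
    unfold Rdiv. rewrite Rmult_assoc, Rinv_l, Rmult_1_r by nra.
    assert (e * ((2 - e) * C + e) <= e * (3 * C)) by (apply Rmult_le_compat_l; nra).
    assert (e * (3 * C) <= e * C * (D * D)).
    { replace (e * (3 * C)) with (e * C * 3) by ring. apply Rmult_le_compat_l; nra. }
    lra.
Qed.

Lemma dphi_abs e B : 0 <= e -> Rabs (dphi e B) <= e * Cf B.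
Proof.
  intros He. pose proof (Qf_nonneg B). pose proof (exp_pos B). pose proof (exp_pos (- B)).
  unfold dphi, Cf. set (q := Qf B) in *.
  assert (Hd : 1 <= 1 + e * q) by nra.
  unfold Rdiv. rewrite Rabs_mult, Rabs_Rinv by lra. rewrite (Rabs_right (1 + e * q)) by lra.
  apply Rmult_le_reg_r with (1 + e * q); [lra|].
  rewrite Rmult_assoc, Rinv_l, Rmult_1_r by lra.
  rewrite !Rabs_mult, (Rabs_right e), (Rabs_right (/ 4)) by lra.
  assert (Rabs (exp B - exp (- B)) <= exp B + exp (- B)).
  { apply Rabs_le; lra. }
  assert (e * Rabs (exp B - exp (- B)) * / 4 <= e * (exp B + exp (- B)) * / 4).
  { apply Rmult_le_compat_r; [lra|]. apply Rmult_le_compat_l; lra. }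
  assert (0 <= e * (exp B + exp (- B))) by nra.
  nra.
Qed.

Lemma Cf_loc B u : Rabs (u - B) <= 1 -> Cf u <= exp (Rabs B + 1).
Proof.
  intros H. unfold Cf.
  assert (exp u <= exp (Rabs B + 1)).
  { apply exp_le. unfold Rabs in *. destruct (Rcase_abs (u - B)); destruct (Rcase_abs B); lra. }
  assert (exp (- u) <= exp (Rabs B + 1)).
  { apply exp_le. unfold Rabs in *. destruct (Rcase_abs (u - B)); destruct (Rcase_abs B); lra. }
  lra.
Qed.

Lemma phi_taylor e B d : 0 <= e -> e <= 1 -> Rabs d <= 1 ->
  Rabs (phi e (B + d) - phi e B - d * dphi e B) <= e * exp (Rabs B + 1) * (d * d).
Proof.
  intros He He1 Hd. apply taylor2 with (ddphi e).
  - intros; apply phi_der; auto.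
  - intros; apply dphi_der; auto.
  - intros u Hu. destruct (ddphi_bounds e u He He1). rewrite Rabs_right by lra.
    apply Rle_trans with (e * Cf u); auto. apply Rmult_le_compat_l; auto.
    apply Cf_loc. apply Rabs_le; lra.
Qed.

Lemma dphi_lip e B d : 0 <= e -> e <= 1 -> Rabs d <= 1 ->
  Rabs (dphi e (B + d) - dphi e B) <= e * exp (Rabs B + 1) * Rabs d.
Proof.
  intros He He1 Hd. apply lip_of_d with (ddphi e).
  - intros; apply dphi_der; auto.
  - intros u Hu. destruct (ddphi_bounds e u He He1). rewrite Rabs_right by lra.
    apply Rle_trans with (e * Cf u); auto. apply Rmult_le_compat_l; auto.
    apply Cf_loc. apply Rabs_le; lra.
Qed.

Lemma phi_convex e a b t : 0 <= e -> e <= 1 -> 0 <= t <= 1 ->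
  phi e (t * a + (1 - t) * b) <= t * phi e a + (1 - t) * phi e b.
Proof.
  intros He He1 Ht. apply convex_of_d2 with (dphi e) (ddphi e); auto.
  - intros; apply phi_der; auto.
  - intros; apply dphi_der; auto.
  - intros; apply ddphi_bounds; auto.
Qed.

Definition Eg (x : R) : R := erfc x * erfc (- x).

Lemma Eg_pos x : 0 < Eg x.
Proof. unfold Eg. pose proof (erfc_pos x). pose proof (erfc_pos (- x)). nra. Qed.

Lemma Eg_le1 x : Eg x <= 1.
Proof. unfold Eg. rewrite erfc_refl. pose proof (Rle_0_sqr (erfc x - 1)). unfold Rsqr in *. nra. Qed.

Lemma Eg_tail x : Eg x <= 2 * exp (1 - 2 * x).
Proof.
  unfold Eg. pose proof (erfc_upper1 x). pose proof (erfc_pos x). pose proof (erfc_le2 (- x)).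
  pose proof (erfc_pos (- x)). nra.
Qed.

Lemma Eg_sq x : 1 <= x -> Eg x <= 2 * exp (- (x * x)).
Proof.
  intros Hx. unfold Eg. pose proof (erfc_upper2 x Hx). pose proof (erfc_pos x). pose proof (erfc_le2 (- x)).
  pose proof (erfc_pos (- x)). nra.
Qed.

Lemma Eg_low x : 0 <= x -> exp (- ((x + 1) * (x + 1))) <= Eg x.
Proof.
  intros Hx. unfold Eg. pose proof (erfc_lower x Hx). pose proof (erfc_ge1 (- x) ltac:(lra)).
  pose proof (exp_pos (- ((x + 1) * (x + 1)))). nra.
Qed.

Lemma Eg_exd x : ex_derive Eg x.
Proof.
  unfold Eg. auto_derive. repeat split; eexists; apply erfc_derive.
Qed.

Lemma ln_le_id y : 0 <= y -> ln (1 + y) <= y.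
Proof.
  intros Hy. rewrite <- (ln_exp y) at 2. apply ln_le. lra. apply exp_ineq1_le.
Qed.

Lemma ln_nonneg y : 0 <= y -> 0 <= ln (1 + y).
Proof. intros. rewrite <- ln_1. apply ln_le; lra. Qed.

Lemma phi_nonneg e B : 0 <= e -> 0 <= phi e B.
Proof. intros. unfold phi. apply ln_nonneg. pose proof (Qf_nonneg B). nra. Qed.

Lemma phi_le e B : 0 <= e -> phi e B <= e * Qf B.
Proof. intros. unfold phi. apply ln_le_id. pose proof (Qf_nonneg B). nra. Qed.

Lemma cont_phiE B x : continuous (fun eta => phi (Eg eta) B) x.
Proof.
  apply continuity_pt_filterlim. apply derivable_continuous_pt. apply ex_derive_Reals_0.
  unfold phi. pose proof (Eg_pos x). pose proof (Qf_nonneg B). auto_derive.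
  split. apply Eg_exd. split; [nra| auto].
Qed.

Lemma cont_dphiE B x : continuous (fun eta => dphi (Eg eta) B) x.
Proof.
  apply continuity_pt_filterlim. apply derivable_continuous_pt. apply ex_derive_Reals_0.
  unfold dphi. pose proof (Eg_pos x). pose proof (Qf_nonneg B). auto_derive.
  split. apply Eg_exd. split. apply Eg_exd. split; [nra| auto].
Qed.

Lemma tail_conv c : is_int_to_infty (fun eta => c * (2 * exp (1 - 2 * eta))) 0 (c * exp 1).
Proof.
  replace (c * exp 1) with ((c * 2) * (exp (1 - 2 * 0) / 2)) by (replace (1 - 2 * 0) with 1 by ring; field).
  apply conv_ext with (fun eta => (c * 2) * exp (1 - 2 * eta)). intros; ring.
  apply conv_scal, exp_tail_conv.
Qed.

Lemma I_fun B : (fun eta => ln (1 + sinh (B / 2) ^ 2 * erfc eta * erfc (- eta))) = (fun eta => phi (Eg eta) B).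
Proof.
  apply functional_extensionality. intros eta. unfold phi, Eg. rewrite sinh_sq. f_equal. ring.
Qed.

Lemma I_exists B : exists l, is_int_to_infty (fun eta => phi (Eg eta) B) 0 l.
Proof.
  destruct (conv_dom (fun eta => phi (Eg eta) B) (fun eta => Qf B * (2 * exp (1 - 2 * eta))) 0 (Qf B * exp 1))
    as [l [Hl _]].
  - intros; apply ex_RInt_contR; intros; apply cont_phiE.
  - intros x _. pose proof (Eg_pos x). rewrite Rabs_right by (apply Rle_ge, phi_nonneg; lra).
    apply Rle_trans with (Eg x * Qf B). apply phi_le; lra.
    pose proof (Qf_nonneg B). pose proof (Eg_tail x). nra.
  - apply tail_conv.
  - exists l; auto.
Qed.

Lemma I_conv B : is_int_to_infty (fun eta => phi (Eg eta) B) 0 (Defs.I B).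
Proof.
  destruct (I_exists B) as [l Hl]. unfold Defs.I. rewrite I_fun. rewrite (Int_eq _ _ _ Hl). exact Hl.
Qed.

Definition Dv (B : R) : R := Int_to_infty (fun eta => dphi (Eg eta) B) 0.

Lemma D_conv B : is_int_to_infty (fun eta => dphi (Eg eta) B) 0 (Dv B).
Proof.
  destruct (conv_dom (fun eta => dphi (Eg eta) B) (fun eta => Cf B * (2 * exp (1 - 2 * eta))) 0 (Cf B * exp 1))
    as [l [Hl _]].
  - intros; apply ex_RInt_contR; intros; apply cont_dphiE.
  - intros x _. pose proof (Eg_pos x).
    apply Rle_trans with (Eg x * Cf B). apply dphi_abs; lra.
    pose proof (Cf_ge1 B). pose proof (Eg_tail x). nra.
  - apply tail_conv.
  - unfold Dv. rewrite (Int_eq _ _ _ Hl). exact Hl.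
Qed.

Lemma conv_abs_le (f k : R -> R) a l L : is_int_to_infty f a l -> is_int_to_infty k a L ->
  (forall x, a <= x -> Rabs (f x) <= k x) -> Rabs l <= L.
Proof.
  intros Hf Hk Hb. apply Rabs_le. split.
  - replace (- L) with ((-1) * L) by ring.
    apply (conv_le (fun x => (-1) * k x) f a); auto. apply conv_scal; auto.
    intros x Hx. specialize (Hb x Hx). apply Rabs_def2b in Hb; lra.
  - apply (conv_le f k a); auto.
    intros x Hx. specialize (Hb x Hx). apply Rabs_def2b in Hb; lra.
Qed.

Lemma I_taylor B d : Rabs d <= 1 ->
  Rabs (Defs.I (B + d) - Defs.I B - d * Dv B) <= exp (Rabs B + 1) * exp 1 * (d * d).
Proof.
  intros Hd.
  assert (C : is_int_to_infty (fun eta => phi (Eg eta) (B + d) + ((-1) * phi (Eg eta) B + (- d) * dphi (Eg eta) B)) 0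
     (Defs.I (B + d) + ((-1) * Defs.I B + (- d) * Dv B))).
  { apply conv_plus. apply I_conv. apply conv_plus; apply conv_scal. apply I_conv. apply D_conv. }
  replace (Defs.I (B + d) - Defs.I B - d * Dv B) with (Defs.I (B + d) + ((-1) * Defs.I B + (- d) * Dv B)) by ring.
  replace (exp (Rabs B + 1) * exp 1 * (d * d)) with ((exp (Rabs B + 1) * (d * d)) * exp 1) by ring.
  apply (conv_abs_le _ _ 0 _ _ C (tail_conv _)).
  intros x _. replace (phi (Eg x) (B + d) + (-1 * phi (Eg x) B + - d * dphi (Eg x) B))
    with (phi (Eg x) (B + d) - phi (Eg x) B - d * dphi (Eg x) B) by ring.
  pose proof (Eg_pos x). pose proof (Eg_le1 x). pose proof (Eg_tail x).
  apply Rle_trans with (Eg x * exp (Rabs B + 1) * (d * d)).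
  apply phi_taylor; lra.
  pose proof (exp_pos (Rabs B + 1)). assert (0 <= d * d) by nra.
  replace (Eg x * exp (Rabs B + 1) * (d * d)) with ((exp (Rabs B + 1) * (d * d)) * Eg x) by ring.
  apply Rmult_le_compat_l; [nra|lra].
Qed.

Lemma D_lip B d : Rabs d <= 1 ->
  Rabs (Dv (B + d) - Dv B) <= exp (Rabs B + 1) * exp 1 * Rabs d.
Proof.
  intros Hd.
  assert (C : is_int_to_infty (fun eta => dphi (Eg eta) (B + d) + (-1) * dphi (Eg eta) B) 0
     (Dv (B + d) + (-1) * Dv B)).
  { apply conv_plus. apply D_conv. apply conv_scal. apply D_conv. }
  replace (Dv (B + d) - Dv B) with (Dv (B + d) + (-1) * Dv B) by ring.
  replace (exp (Rabs B + 1) * exp 1 * Rabs d) with ((exp (Rabs B + 1) * Rabs d) * exp 1) by ring.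
  apply (conv_abs_le _ _ 0 _ _ C (tail_conv _)).
  intros x _. replace (dphi (Eg x) (B + d) + -1 * dphi (Eg x) B) with (dphi (Eg x) (B + d) - dphi (Eg x) B) by ring.
  pose proof (Eg_pos x). pose proof (Eg_le1 x). pose proof (Eg_tail x).
  apply Rle_trans with (Eg x * exp (Rabs B + 1) * Rabs d).
  apply dphi_lip; lra.
  pose proof (exp_pos (Rabs B + 1)). pose proof (Rabs_pos d).
  replace (Eg x * exp (Rabs B + 1) * Rabs d) with ((exp (Rabs B + 1) * Rabs d) * Eg x) by ring.
  apply Rmult_le_compat_l; [nra|lra].
Qed.

Lemma I_deriv B : derivable_pt_lim Defs.I B (Dv B).
Proof.
  intros eps Heps. set (K := exp (Rabs B + 1) * exp 1).
  assert (HK : 0 < K) by (unfold K; apply Rmult_lt_0_compat; apply exp_pos).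
  assert (Hd : 0 < Rmin 1 (eps / K)) by (apply Rmin_pos; [lra| apply Rdiv_lt_0_compat; lra]).
  exists (mkposreal _ Hd). intros hh Hh0 Hh. simpl in Hh.
  assert (Hh1 : Rabs hh <= 1) by (left; eapply Rlt_le_trans; [eauto| apply Rmin_l]).
  assert (Hh2 : Rabs hh < eps / K) by (eapply Rlt_le_trans; [eauto| apply Rmin_r]).
  pose proof (I_taylor B hh Hh1) as HT. fold K in HT.
  assert (Ha : 0 < Rabs hh) by (apply Rabs_pos_lt; auto).
  replace ((Defs.I (B + hh) - Defs.I B) / hh - Dv B) with ((Defs.I (B + hh) - Defs.I B - hh * Dv B) / hh)
    by (field; auto).
  unfold Rdiv. rewrite Rabs_mult, Rabs_Rinv by auto.
  apply Rmult_lt_reg_r with (Rabs hh); auto.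
  rewrite Rmult_assoc, Rinv_l, Rmult_1_r by lra.
  apply Rle_lt_trans with (K * (hh * hh)); auto.
  replace (hh * hh) with (Rabs hh * Rabs hh) by (rewrite <- Rabs_mult; apply Rabs_right; nra).
  assert (K * Rabs hh < eps).
  { apply Rmult_lt_reg_r with (/ K). apply Rinv_0_lt_compat; auto.
    replace (K * Rabs hh * / K) with (Rabs hh) by (field; lra). exact Hh2. }
  nra.
Qed.

Lemma D_cont : continuity Dv.
Proof.
  intros B. unfold continuity_pt, continue_in, limit1_in, limit_in. intros eps Heps.
  set (K := exp (Rabs B + 1) * exp 1).
  assert (HK : 0 < K) by (unfold K; apply Rmult_lt_0_compat; apply exp_pos).
  exists (Rmin 1 (eps / K)). split.
  - apply Rmin_pos; [lra| apply Rdiv_lt_0_compat; lra].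
  - intros x [_ Hx]. simpl in *. unfold R_dist in *.
    assert (Hh1 : Rabs (x - B) <= 1) by (left; eapply Rlt_le_trans; [eauto| apply Rmin_l]).
    assert (Hh2 : Rabs (x - B) < eps / K) by (eapply Rlt_le_trans; [eauto| apply Rmin_r]).
    pose proof (D_lip B (x - B) Hh1) as HL. replace (B + (x - B)) with x in HL by ring. fold K in HL.
    apply Rle_lt_trans with (K * Rabs (x - B)); auto.
    apply Rmult_lt_reg_r with (/ K). apply Rinv_0_lt_compat; auto.
    replace (K * Rabs (x - B) * / K) with (Rabs (x - B)) by (field; lra).
    replace (eps * / K) with (eps / K) by reflexivity. exact Hh2.
Qed.

Lemma I_convex a b t : 0 <= t <= 1 ->
  Defs.I (t * a + (1 - t) * b) <= t * Defs.I a + (1 - t) * Defs.I b.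
Proof.
  intros Ht. apply (conv_le (fun eta => phi (Eg eta) (t * a + (1 - t) * b))
     (fun eta => t * phi (Eg eta) a + (1 - t) * phi (Eg eta) b) 0).
  - apply I_conv.
  - apply conv_plus; apply conv_scal; apply I_conv.
  - intros x _. pose proof (Eg_pos x). pose proof (Eg_le1 x). apply phi_convex; lra.
Qed.

Lemma tangent (f : R -> R) B x :
  (forall a b t, 0 <= t <= 1 -> f (t * a + (1 - t) * b) <= t * f a + (1 - t) * f b) ->
  derivable_pt_lim f B x -> forall y, f B + x * (y - B) <= f y.
Proof.
  intros Hc Hd y. apply Rnot_lt_le. intros Hlt.
  set (del := f B + x * (y - B) - f y).
  assert (Hdel : 0 < del) by (unfold del; lra).
  assert (HyB : y <> B) by (intro; subst; unfold del in Hdel; lra).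
  assert (Ha : 0 < Rabs (y - B)) by (apply Rabs_pos_lt; lra).
  destruct (Hd (del / Rabs (y - B))) as [dl Hdl]. apply Rdiv_lt_0_compat; auto.
  set (t := Rmin 1 (dl / (2 * Rabs (y - B)))).
  assert (Ht0 : 0 < t) by (apply Rmin_pos; [lra| apply Rdiv_lt_0_compat; [apply cond_pos|lra]]).
  assert (Ht1 : t <= 1) by apply Rmin_l.
  assert (Ht2 : t <= dl / (2 * Rabs (y - B))) by apply Rmin_r.
  set (hh := t * (y - B)).
  assert (Hh0 : hh <> 0) by (unfold hh; intro H; apply Rmult_integral in H; destruct H; lra).
  assert (Hhabs : Rabs hh = t * Rabs (y - B)) by (unfold hh; rewrite Rabs_mult, Rabs_right; lra).
  assert (Hhl : Rabs hh < dl).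
  { rewrite Hhabs. pose proof (cond_pos dl).
    apply Rle_lt_trans with (dl / (2 * Rabs (y - B)) * Rabs (y - B)).
    apply Rmult_le_compat_r; lra. replace (dl / (2 * Rabs (y - B)) * Rabs (y - B)) with (dl / 2) by (field; lra). lra. }
  specialize (Hdl hh Hh0 Hhl).
  assert (Hcv : f (B + hh) <= (1 - t) * f B + t * f y).
  { replace (B + hh) with (t * y + (1 - t) * B) by (unfold hh; ring).
    pose proof (Hc y B t ltac:(lra)). lra. }
  assert (Hq : (f (B + hh) - f B) / hh - x = (f (B + hh) - f B - x * hh) / hh) by (field; auto).
  assert (Hnum : f (B + hh) - f B - x * hh <= - t * del).
  { unfold del, hh in *. nra. }
  rewrite Hq in Hdl. unfold Rdiv in Hdl. rewrite Rabs_mult, Rabs_Rinv in Hdl by auto.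
  assert (Hge : t * del <= Rabs (f (B + hh) - f B - x * hh)).
  { rewrite Rabs_left1. lra. pose proof (Rmult_lt_0_compat _ _ Ht0 Hdel). lra. }
  assert (t * del * / Rabs hh <= Rabs (f (B + hh) - f B - x * hh) * / Rabs hh).
  { apply Rmult_le_compat_r; auto. left; apply Rinv_0_lt_compat. rewrite Hhabs; nra. }
  assert (t * del * / Rabs hh = del / Rabs (y - B)) by (rewrite Hhabs; field; lra).
  lra.
Qed.

Lemma I_zero : Defs.I 0 = 0.
Proof.
  pose proof (I_conv 0).
  assert (is_int_to_infty (fun eta => phi (Eg eta) 0) 0 (0 * exp 1)).
  { apply conv_ext with (fun eta => 0 * (2 * exp (1 - 2 * eta))).
    - intros x _. unfold phi, Qf. rewrite Ropp_0, exp_0. replace (1 + Eg x * ((1 + 1 - 2) / 4)) with 1 by field.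
      rewrite ln_1. ring.
    - apply tail_conv. }
  apply Int_eq in H. apply Int_eq in H0. rewrite H0 in H. lra.
Qed.

Lemma I_nonneg B : 0 <= Defs.I B.
Proof.
  replace 0 with (0 * exp 1) by ring.
  apply (conv_le (fun eta => 0 * (2 * exp (1 - 2 * eta))) (fun eta => phi (Eg eta) B) 0).
  apply tail_conv. apply I_conv. intros x _. pose proof (Eg_pos x).
  replace (0 * (2 * exp (1 - 2 * x))) with 0 by ring. apply phi_nonneg; lra.
Qed.

Lemma D_zero : Dv 0 = 0.
Proof.
  pose proof (D_conv 0).
  assert (is_int_to_infty (fun eta => dphi (Eg eta) 0) 0 (0 * exp 1)).
  { apply conv_ext with (fun eta => 0 * (2 * exp (1 - 2 * eta))).
    - intros x _. unfold dphi. rewrite Ropp_0, exp_0. unfold Rdiv. ring.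
    - apply tail_conv. }
  apply Int_eq in H. apply Int_eq in H0. rewrite H0 in H. lra.
Qed.

Lemma exp1_ge2 : 2 <= exp 1.
Proof. pose proof (exp_ineq1_le 1). lra. Qed.

Lemma exp3_ge8 : 8 <= exp 3.
Proof.
  replace 3 with (1 + 1 + 1) by ring. rewrite !exp_plus. pose proof exp1_ge2. nra.
Qed.

Lemma Qf_upper B : 0 <= B -> Qf B <= exp B / 4.
Proof.
  intros HB. unfold Qf. assert (exp (- B) <= 1) by (rewrite <- exp_0; apply exp_le; lra). lra.
Qed.

Lemma Qf_lower B : 4 <= B -> exp B / 8 <= Qf B.
Proof.
  intros HB. unfold Qf. pose proof (exp_pos (- B)). pose proof (exp_ineq1_le B). lra.
Qed.

Lemma eQ_bound e B x : 0 <= B -> 1 <= x -> 0 <= e -> e <= 2 * exp (- (x * x)) ->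
  e * Qf B <= exp (B - x * x) / 2.
Proof.
  intros HB Hx He He2. pose proof (Qf_upper B HB). pose proof (Qf_nonneg B).
  unfold Rminus. rewrite exp_plus.
  apply Rle_trans with (2 * exp (- (x * x)) * (exp B / 4)).
  - apply Rmult_le_compat; auto.
  - pose proof (exp_pos B). pose proof (exp_pos (- (x * x))). lra.
Qed.

Section Bounds.
Variable T : R.
Hypothesis HT : 2 <= T.

Let B := T * T.

Lemma B_ge4 : 4 <= B.
Proof. unfold B. nra. Qed.

Lemma U1 x : 0 <= x <= T -> phi (Eg x) B <= B - x * x + 1.
Proof.
  intros Hx. pose proof (Eg_pos x). pose proof (Eg_le1 x). pose proof B_ge4.
  pose proof (Qf_nonneg B). pose proof (Qf_upper B ltac:(lra)).
  unfold phi. rewrite <- (ln_exp (B - x * x + 1)). apply ln_le. nra.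
  destruct (Rle_dec x 1).
  - apply Rle_trans with (exp B).
    + pose proof (exp_ineq1_le B). nra.
    + apply exp_le. nra.
  - pose proof (Eg_sq x ltac:(lra)).
    pose proof (eQ_bound (Eg x) B x ltac:(lra) ltac:(lra) ltac:(lra) H4).
    assert (1 <= exp (B - x * x)) by (rewrite <- exp_0; apply exp_le; unfold B; nra).
    rewrite exp_plus. pose proof exp1_ge2. nra.
Qed.

Lemma U2 x : T <= x -> phi (Eg x) B <= 1.
Proof.
  intros Hx. pose proof (Eg_pos x). pose proof B_ge4.
  pose proof (eQ_bound (Eg x) B x ltac:(lra) ltac:(lra) ltac:(lra) (Eg_sq x ltac:(lra))).
  assert (exp (B - x * x) <= 1) by (rewrite <- exp_0; apply exp_le; unfold B; nra).
  apply Rle_trans with (Eg x * Qf B). apply phi_le; lra. lra.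
Qed.

Lemma U3 x : T + 1 <= x -> phi (Eg x) B <= exp (2 * T - 2 * x).
Proof.
  intros Hx. pose proof (Eg_pos x). pose proof B_ge4.
  pose proof (eQ_bound (Eg x) B x ltac:(lra) ltac:(lra) ltac:(lra) (Eg_sq x ltac:(lra))).
  assert (exp (B - x * x) <= exp (2 * T - 2 * x)) by (apply exp_le; unfold B; nra).
  pose proof (exp_pos (B - x * x)).
  apply Rle_trans with (Eg x * Qf B). apply phi_le; lra. lra.
Qed.

Lemma L1 x : 0 <= x -> B - (x + 1) * (x + 1) - 3 <= phi (Eg x) B.
Proof.
  intros Hx. pose proof (Eg_low x Hx). pose proof B_ge4. pose proof (Qf_lower B H0).
  pose proof (Qf_nonneg B). pose proof (Eg_pos x).
  unfold phi. rewrite <- (ln_exp (B - (x + 1) * (x + 1) - 3)). apply ln_le. apply exp_pos.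
  replace (B - (x + 1) * (x + 1) - 3) with (- ((x + 1) * (x + 1)) + (B - 3)) by ring.
  rewrite exp_plus.
  assert (E3 : exp B = exp (B - 3) * exp 3) by (rewrite <- exp_plus; f_equal; ring).
  pose proof exp3_ge8. pose proof (exp_pos (B - 3)).
  assert (exp (B - 3) <= Qf B) by nra.
  pose proof (exp_pos (- ((x + 1) * (x + 1)))).
  assert (exp (- ((x + 1) * (x + 1))) * exp (B - 3) <= Eg x * Qf B).
  { apply Rmult_le_compat; lra. }
  lra.
Qed.

Lemma exF a b : ex_RInt (fun eta => phi (Eg eta) B) a b.
Proof. apply ex_RInt_contR. intros; apply cont_phiE. Qed.

Lemma poly_up : RInt (fun x => B - x * x + 1) 0 T = 2 / 3 * (T * T * T) + T.
Proof.
  apply is_RInt_unique.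
  replace (2 / 3 * (T * T * T) + T) with
    (minus ((fun x => B * x - x * x * x / 3 + x) T) ((fun x => B * x - x * x * x / 3 + x) 0))
    by (unfold minus, plus, opp, B; simpl; field).
  apply (@is_RInt_derive R_CompleteNormedModule (fun x => B * x - x * x * x / 3 + x)).
  - intros x _. auto_derive; auto. field.
  - intros x _. apply continuity_pt_filterlim. apply derivable_continuous_pt.
    apply ex_derive_Reals_0. auto_derive. auto.
Qed.

Lemma poly_low : RInt (fun x => B - (x + 1) * (x + 1) - 3) 0 T = 2 / 3 * (T * T * T) - T * T - 4 * T.
Proof.
  apply is_RInt_unique.
  replace (2 / 3 * (T * T * T) - T * T - 4 * T) with
    (minus ((fun x => B * x - (x + 1) * (x + 1) * (x + 1) / 3 - 3 * x) T)
           ((fun x => B * x - (x + 1) * (x + 1) * (x + 1) / 3 - 3 * x) 0))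
    by (unfold minus, plus, opp, B; simpl; field).
  apply (@is_RInt_derive R_CompleteNormedModule (fun x => B * x - (x + 1) * (x + 1) * (x + 1) / 3 - 3 * x)).
  - intros x _. auto_derive; auto. field.
  - intros x _. apply continuity_pt_filterlim. apply derivable_continuous_pt.
    apply ex_derive_Reals_0. auto_derive. auto.
Qed.

Lemma I_upper : Defs.I B <= 2 / 3 * (T * T * T) + 7 * (T * T).
Proof.
  pose proof (I_conv B) as HC.
  pose proof (conv_shift_r _ 0 _ (T + 1) HC ltac:(lra)) as HS.
  assert (Htail : Defs.I B - RInt (fun eta => phi (Eg eta) B) 0 (T + 1) <= exp (2 * T - 2 * (T + 1)) / 2).
  { apply (conv_le _ _ (T + 1) _ _ HS (exp_tail_conv (2 * T) (T + 1))). intros; apply U3; lra. }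
  replace (2 * T - 2 * (T + 1)) with (- 2) in Htail by ring.
  assert (exp (-2) <= 1) by (rewrite <- exp_0; apply exp_le; lra).
  rewrite <- (RInt_Ch _ 0 T (T + 1)) in Htail by apply exF.
  assert (H1 : RInt (fun eta => phi (Eg eta) B) 0 T <= 2 / 3 * (T * T * T) + T).
  { rewrite <- poly_up. apply RInt_le. lra. apply exF.
    apply ex_RInt_contR. intros; apply continuity_pt_filterlim. apply derivable_continuous_pt.
    apply ex_derive_Reals_0. auto_derive. auto.
    intros; apply U1; lra. }
  assert (H2 : RInt (fun eta => phi (Eg eta) B) T (T + 1) <= 1).
  { apply Rle_trans with (RInt (fun _ => 1) T (T + 1)).
    apply RInt_le. lra. apply exF. apply ex_RInt_contR; intros; apply continuous_const.
    intros; apply U2; lra. rewrite RInt_constR. lra. }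
  nra.
Qed.

Lemma I_lower : 2 / 3 * (T * T * T) - 5 * (T * T) <= Defs.I B.
Proof.
  pose proof (I_conv B) as HC.
  assert (H0 : RInt (fun eta => phi (Eg eta) B) 0 T <= Defs.I B).
  { apply (conv_partial_le _ 0); auto. intros. apply phi_nonneg. pose proof (Eg_pos x); lra. lra. }
  assert (H1 : 2 / 3 * (T * T * T) - T * T - 4 * T <= RInt (fun eta => phi (Eg eta) B) 0 T).
  { rewrite <- poly_low. apply RInt_le. lra.
    apply ex_RInt_contR. intros; apply continuity_pt_filterlim. apply derivable_continuous_pt.
    apply ex_derive_Reals_0. auto_derive. auto. apply exF.
    intros; apply L1; lra. }
  nra.
Qed.

End Bounds.

Lemma I_bounds T : 2 <= T -> Rabs (Defs.I (T * T) - 2 / 3 * (T * T * T)) <= 7 * (T * T).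
Proof.
  intros HT. pose proof (I_upper T HT). pose proof (I_lower T HT).
  apply Rabs_le. nra.
Qed.

Lemma I_tangent B x : derivable_pt_lim Defs.I B x -> forall y, Defs.I B + x * (y - B) <= Defs.I y.
Proof. intros H. apply tangent; auto. intros; apply I_convex; auto. Qed.

Lemma exists_B x : 0 < x -> exists B, 0 <= B /\ derivable_pt_lim Defs.I B x.
Proof.
  intros Hx. set (t := 2 + 3 / 2 * (x + 5)).
  assert (Ht : 2 <= t) by (unfold t; lra).
  set (B1 := t * t).
  assert (HB1 : 4 <= B1) by (unfold B1; nra).
  pose proof (I_tangent B1 (Dv B1) (I_deriv B1) 0) as H0. rewrite I_zero in H0.
  pose proof (I_lower t Ht) as HL. fold B1 in HL.
  assert (HD : x <= Dv B1).
  { assert (B1 * Dv B1 >= Defs.I B1) by nra.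
    assert (B1 * x <= B1 * Dv B1); [|nra].
    assert (HBe : B1 = t * t) by reflexivity.
    assert (t * t * x <= t * t * (2 / 3 * t - 5)).
    { apply Rmult_le_compat_l. nra. unfold t. lra. }
    rewrite HBe in *. nra. }
  destruct (IVT_gen Dv 0 B1 x D_cont) as [B [HB HDB]].
  - rewrite D_zero. rewrite Rmin_left, Rmax_right by lra. lra.
  - exists B. rewrite Rmin_left, Rmax_right in HB by lra. split; [lra|].
    rewrite <- HDB. apply I_deriv.
Qed.

Lemma B_of_spec sigma xi : 0 < sigma -> xi <> 0 ->
  0 <= B_of sigma xi /\ derivable_pt_lim Defs.I (B_of sigma xi) (Rabs xi / sigma).
Proof.
  intros Hs Hxi. unfold B_of. apply epsilon_spec.
  apply exists_B. apply Rdiv_lt_0_compat; auto. apply Rabs_pos_lt; auto.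
Qed.

Section Est.
Variables (T x : R).
Hypothesis HT : 0 <= T.
Hypothesis Hx : 0 < x.
Hypothesis HD : derivable_pt_lim Defs.I (T * T) x.

Lemma est_a : x <= 8 * ((T + 2) * (T + 2) * (T + 2)).
Proof.
  pose proof (I_tangent _ _ HD ((T + 2) * (T + 2))) as H.
  pose proof (I_nonneg (T * T)).
  pose proof (I_upper (T + 2) ltac:(lra)).
  assert (x <= x * ((T + 2) * (T + 2) - T * T)) by nra.
  nra.
Qed.

Lemma est_up eps : 4 <= T -> 0 < eps <= 1 / 2 -> x <= T * (1 + eps) + 35 / eps.
Proof.
  intros H4 He. set (s := T * (1 + eps)).
  pose proof (I_tangent _ _ HD (s * s)) as H.
  pose proof (I_upper s ltac:(unfold s; nra)).
  pose proof (I_lower T ltac:(lra)).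
  set (W := T * (1 + eps) + 35 / eps).
  assert (HW : W * eps = T * (1 + eps) * eps + 35) by (unfold W; field; lra).
  assert (Hpos : 0 < s * s - T * T).
  { replace (s * s - T * T) with (T * T * (eps * (2 + eps))) by (unfold s; ring).
    apply Rmult_lt_0_compat; nra. }
  assert (HB : x * (s * s - T * T) <= 2 / 3 * (s * s * s - T * T * T) + 7 * (s * s + T * T)) by nra.
  assert (HE1 : (s * s - T * T) = T * T * eps * (2 + eps)) by (unfold s; ring).
  assert (HE2 : s * s * s - T * T * T = T * T * T * eps * (3 + 3 * eps + eps * eps)) by (unfold s; ring).
  assert (HE3 : s * s + T * T = T * T * (2 + 2 * eps + eps * eps)) by (unfold s; ring).
  assert (Hgoal : 2 / 3 * (s * s * s - T * T * T) + 7 * (s * s + T * T) <= W * (s * s - T * T)).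
  { rewrite HE1, HE2, HE3.
    replace (W * (T * T * eps * (2 + eps))) with (T * T * (2 + eps) * (W * eps)) by ring.
    rewrite HW.
    assert (0 <= T * T * T * eps * (eps + eps * eps / 3)).
    { apply Rmult_le_pos; [|nra]. repeat apply Rmult_le_pos; lra. }
    assert (0 <= T * T * (56 + 21 * eps - 7 * eps * eps)).
    { apply Rmult_le_pos; nra. }
    nra. }
  assert (x * (s * s - T * T) <= W * (s * s - T * T)) by lra.
  apply Rmult_le_reg_r with (s * s - T * T); auto.
Qed.

Lemma est_low eps : 4 <= T -> 0 < eps <= 1 / 2 -> T * (1 - eps) - 35 / eps <= x.
Proof.
  intros H4 He. set (s := T * (1 - eps)).
  assert (Hs2 : 2 <= s) by (unfold s; nra).
  pose proof (I_tangent _ _ HD (s * s)) as H.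
  pose proof (I_upper s Hs2).
  pose proof (I_lower T ltac:(lra)).
  set (W := T * (1 - eps) - 35 / eps).
  assert (HW : W * eps = T * (1 - eps) * eps - 35) by (unfold W; field; lra).
  assert (Hpos : 0 < T * T - s * s).
  { replace (T * T - s * s) with (T * T * (eps * (2 - eps))) by (unfold s; ring).
    apply Rmult_lt_0_compat; nra. }
  assert (HB : 2 / 3 * (T * T * T - s * s * s) - 7 * (s * s + T * T) <= x * (T * T - s * s)) by nra.
  assert (HE1 : (T * T - s * s) = T * T * eps * (2 - eps)) by (unfold s; ring).
  assert (HE2 : T * T * T - s * s * s = T * T * T * eps * (3 - 3 * eps + eps * eps)) by (unfold s; ring).
  assert (HE3 : s * s + T * T = T * T * (2 - 2 * eps + eps * eps)) by (unfold s; ring).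
  assert (Hgoal : W * (T * T - s * s) <= 2 / 3 * (T * T * T - s * s * s) - 7 * (s * s + T * T)).
  { rewrite HE1, HE2, HE3.
    replace (W * (T * T * eps * (2 - eps))) with (T * T * (2 - eps) * (W * eps)) by ring.
    rewrite HW.
    assert (0 <= T * T * T * eps * (eps - eps * eps / 3)).
    { apply Rmult_le_pos; [|nra]. repeat apply Rmult_le_pos; lra. }
    assert (0 <= T * T * (56 - 21 * eps - 7 * eps * eps)).
    { apply Rmult_le_pos; nra. }
    nra. }
  assert (W * (T * T - s * s) <= x * (T * T - s * s)) by lra.
  apply Rmult_le_reg_r with (T * T - s * s); auto.
Qed.

End Est.

Lemma final_ratio T x J eps d : 0 < T -> 0 < x -> Rabs (x - T) <= d * T -> 0 <= d <= 1 / 2 ->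
  Rabs (J - 2 / 3 * (T * T * T)) <= 7 * (T * T) -> 28 * (d * d) < eps / 2 -> 168 / T <= eps / 2 ->
  Rabs (3 * (T * T * x - J) / (x * x * x) - 1) < eps.
Proof.
  intros HT Hx Hxt Hd HJ Hd2 HT2.
  apply Rabs_def2b in Hxt. apply Rabs_def2b in HJ.
  set (e := J - 2 / 3 * (T * T * T)) in *.
  assert (Hx2 : T / 2 <= x) by nra.
  assert (Hx3 : T * T * T / 8 <= x * x * x).
  { assert (0 <= T / 2) by lra.
    replace (T * T * T / 8) with ((T / 2) * (T / 2) * (T / 2)) by field.
    apply Rmult_le_compat; try nra. }
  assert (Hx3p : 0 < x * x * x) by (apply Rmult_lt_0_compat; nra).
  assert (Hnum : 3 * (T * T * x - J) - x * x * x = - ((x - T) * (x - T) * (x + 2 * T)) - 3 * e)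
    by (unfold e; field).
  assert (Hsq : (x - T) * (x - T) <= d * d * (T * T)) by nra.
  assert (Hxp : x + 2 * T <= 7 / 2 * T) by (assert (d * T <= T / 2) by nra; lra).
  assert (Hb : Rabs (3 * (T * T * x - J) - x * x * x) <= 7 / 2 * (d * d) * (T * T * T) + 21 * (T * T)).
  { rewrite Hnum. apply Rabs_le.
    assert (0 <= (x - T) * (x - T) * (x + 2 * T)) by (apply Rmult_le_pos; [pose proof (Rle_0_sqr (x - T)); unfold Rsqr in *; lra | lra]).
    assert ((x - T) * (x - T) * (x + 2 * T) <= d * d * (T * T) * (7 / 2 * T)).
    { apply Rmult_le_compat; try lra. pose proof (Rle_0_sqr (x - T)); unfold Rsqr in *; lra. }
    nra. }
  replace (3 * (T * T * x - J) / (x * x * x) - 1) with ((3 * (T * T * x - J) - x * x * x) / (x * x * x))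
    by (field; lra).
  unfold Rdiv. rewrite Rabs_mult, Rabs_Rinv, (Rabs_right (x * x * x)) by lra.
  apply Rle_lt_trans with ((7 / 2 * (d * d) * (T * T * T) + 21 * (T * T)) * / (T * T * T / 8)).
  - apply Rmult_le_compat. apply Rabs_pos. left; apply Rinv_0_lt_compat; lra. exact Hb.
    apply Rinv_le_contravar; [|lra]. assert (0 < T * T * T) by (apply Rmult_lt_0_compat; nra). lra.
  - replace ((7 / 2 * (d * d) * (T * T * T) + 21 * (T * T)) * / (T * T * T / 8))
      with (28 * (d * d) + 168 / T) by (field; lra).
    lra.
Qed.

Lemma quenched (rho sigma : R) : 0 < rho -> 0 < sigma ->
  equiv_at_infty (phi_q rho sigma) (fun xi => rho / (3 * sigma ^ 2) * Rabs xi ^ 3).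
Proof.
  intros Hr Hs eps Heps.
  set (d := Rmin (1 / 2) (eps / 100)).
  assert (Hd0 : 0 < d) by (apply Rmin_pos; lra).
  assert (Hd1 : d <= 1 / 2) by apply Rmin_l.
  assert (Hd2 : d <= eps / 100) by apply Rmin_r.
  set (ep := d / 2).
  set (T0 := 4 + 70 / (ep * d) + 336 / eps).
  assert (HT01 : 0 <= 70 / (ep * d)) by (unfold ep; apply Rlt_le, Rdiv_lt_0_compat; nra).
  assert (HT02 : 0 <= 336 / eps) by (apply Rlt_le, Rdiv_lt_0_compat; lra).
  assert (HT0 : 4 <= T0) by (unfold T0; lra).
  exists (sigma * (8 * ((T0 + 2) * (T0 + 2) * (T0 + 2)))). intros xi Hxi.
  assert (HM0 : 0 < sigma * (8 * ((T0 + 2) * (T0 + 2) * (T0 + 2)))).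
  { apply Rmult_lt_0_compat; auto. assert (0 < T0 + 2) by lra.
    repeat apply Rmult_lt_0_compat; lra. }
  assert (Hxi0 : xi <> 0) by (intro; subst; rewrite Rabs_R0 in Hxi; lra).
  set (x := Rabs xi / sigma).
  assert (Hxabs : Rabs xi = sigma * x) by (unfold x; field; lra).
  assert (Hx : 8 * ((T0 + 2) * (T0 + 2) * (T0 + 2)) < x).
  { apply Rmult_lt_reg_l with sigma; auto. rewrite <- Hxabs. exact Hxi. }
  assert (Hxp : 0 < x) by (assert (0 < T0 + 2) by lra; nra).
  destruct (B_of_spec sigma xi Hs Hxi0) as [HB0 HBd]. fold x in HBd.
  set (Bq := B_of sigma xi) in *.
  set (T := sqrt Bq).
  assert (HBT : Bq = T * T) by (unfold T; rewrite sqrt_sqrt; lra).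
  assert (HT : 0 <= T) by apply sqrt_pos.
  rewrite HBT in HBd.
  pose proof (est_a T x HT Hxp HBd) as Ha.
  assert (HTT0 : T0 < T).
  { apply Rnot_le_lt. intro Hle.
    assert ((T + 2) * (T + 2) * (T + 2) <= (T0 + 2) * (T0 + 2) * (T0 + 2)).
    { apply Rmult_le_compat; try nra. }
    lra. }
  assert (HT4 : 4 <= T) by lra.
  assert (Hep : 0 < ep <= 1 / 2) by (unfold ep; lra).
  pose proof (est_up T x HT HBd ep HT4 Hep) as Hup.
  pose proof (est_low T x HT HBd ep HT4 Hep) as Hlow.
  assert (H35 : 35 / ep <= d / 2 * T).
  { assert (70 / (ep * d) <= T) by (unfold T0 in HTT0; lra).
    assert (35 / ep = (d / 2) * (70 / (ep * d))) by (unfold ep; field; lra).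
    rewrite H0. apply Rmult_le_compat_l; lra. }
  assert (Hxt : Rabs (x - T) <= d * T).
  { apply Rabs_le. unfold ep in *. split; nra. }
  pose proof (I_bounds T ltac:(lra)) as HJ.
  assert (HTe : 168 / T <= eps / 2).
  { assert (336 / eps <= T) by (unfold T0 in HTT0; lra).
    apply Rmult_le_reg_r with (2 * T / eps). apply Rdiv_lt_0_compat; lra.
    replace (168 / T * (2 * T / eps)) with (336 / eps) by (field; lra).
    replace (eps / 2 * (2 * T / eps)) with T by (field; lra). lra. }
  assert (Hdd : 28 * (d * d) < eps / 2) by nra.
  pose proof (final_ratio T x (Defs.I (T * T)) eps d ltac:(lra) Hxp Hxt ltac:(lra) HJ Hdd HTe) as HF.
  unfold phi_q. fold Bq. rewrite HBT, Hxabs.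
  replace (rho * (T * T) * (sigma * x) - rho * sigma * Defs.I (T * T)) with
    (rho * sigma * (T * T * x - Defs.I (T * T))) by ring.
  replace (rho * sigma * (T * T * x - Defs.I (T * T)) / (rho / (3 * sigma ^ 2) * (sigma * x) ^ 3))
    with (3 * (T * T * x - Defs.I (T * T)) / (x * x * x)) by (field; repeat split; lra).
  exact HF.
Qed.


Theorem mainTheorem6 (rho sigma : R) (Hrho : 0 < rho) (Hsigma : 0 < sigma) :
  equiv_at_infty (phi_a rho sigma) (fun xi => rho * Rabs xi) /\
  equiv_at_infty (phi_q rho sigma) (fun xi => rho / (3 * sigma ^ 2) * Rabs xi ^ 3).
Proof.
  split.
  - apply annealed; auto.
  - apply quenched; auto.
Qed.
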